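(* Let $N\ge1$ be an integer, $k>0$, $r>0$, $\alpha>0$ with $\alpha/r<\mu^*$. Let $\widetilde U^{\mathrm{eq}}=(x^{\mathrm{eq}},M_0^{\mathrm{eq}},M_1^{\mathrm{eq}},\dots)\in X_+$ be an equilibrium of the infinite system (S) below such that the corresponding equilibrium $U^{\mathrm{eq}}=(x^{\mathrm{eq}},u^{\mathrm{eq}},v^{\mathrm{eq}},w^{\mathrm{eq}},M_0^{\mathrm{eq}},\dots,M_N^{\mathrm{eq}})$ of the $(N+5)$-dimensional system $\dot U=F(U)$ is locally exponentially asymptotically stable. Then every solution $\widetilde U(t)$ of (S) that converges to $\widetilde U^{\mathrm{eq}}$ in the strong topology of $X$ as $t\to+\infty$ does so at an exponential rate, i.e. $\|\widetilde U(t)-\widetilde U^{\mathrm{eq}}\|\le Ce^{-\gamma t}$ for some $C,\gamma>0$ and all $t\ge0$.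
   Context: System (S): for $t\ge0$, $\dot M_0=r-kxM_0-M_0$, $\dot M_i=kxM_{i-1}-kxM_i-M_i$ ($i\ge1$), $\dot x=\alpha-kx\sum_{i=0}^\infty M_i+\sum_{i=N+1}^\infty iM_i$. $X$ is the Banach space of real sequences $(x,M_0,M_1,\dots)$ with norm $\|(x,M_0,M_1,\dots)\|=|x|+\sum_{i\ge0}(i+1)|M_i|<\infty$, and $X_+$ its nonnegative cone; solutions of (S) are the nonnegative solutions with values in $X_+$. To $(x,M_0,M_1,\dots)\in X_+$ corresponds $(x,u,v,w,M_0,\dots,M_N)\in\mathbb{R}^{N+5}$ with $u=\sum_{i\ge0}M_i$, $v=\sum_{i\ge N+1}iM_i$, $w=\sum_{i\ge N}M_i$. The map $F:\mathbb{R}^{N+5}\to\mathbb{R}^{N+5}$ (variables $U_1=x,U_2=u,U_3=v,U_4=w,U_{5+i}=M_i$) is $F_1=\alpha+U_3-kU_1U_2$, $F_2=r-U_2$, $F_3=-U_3+kU_1U_4+NkU_1U_{N+5}$, $F_4=-U_4+kU_1U_{N+4}$, $F_5=r-U_5-kU_1U_5$, $F_j=-U_j+kU_1U_{j-1}-kU_1U_j$ ($6\le j\le N+5$). Finally $\mu^*:=\widetilde{\mathcal F}_N(y^* )$, where $\widetilde{\mathcal F}_N(y)=\frac{y}{1-y}(1-(N+1)y^N+Ny^{N+1})$ and $y^*$ is the unique zero in $(0,1)$ of $p_N(y)=1-(N+1)^2y^N+N(2N+3)y^{N+1}-N(N+1)y^{N+2}$. *)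

(* Defs.v *)
From Stdlib Require Import Reals Lra Lia.
From Coquelicot Require Import Coquelicot.
Open Scope R_scope.

Definition pN (N : nat) (y : R) : R :=
  1 - (INR N + 1) ^ 2 * y ^ N + INR N * (2 * INR N + 3) * y ^ (N + 1)
    - INR N * (INR N + 1) * y ^ (N + 2).

Definition FtildeN (N : nat) (y : R) : R :=
  y / (1 - y) * (1 - (INR N + 1) * y ^ N + INR N * y ^ (N + 1)).

(* An element of X is a pair (x, M) with M : nat -> R the sequence M_0, M_1, ... *)
Definition inX (M : nat -> R) : Prop :=
  ex_series (fun i => (INR i + 1) * Rabs (M i)).

Definition inXplus (x : R) (M : nat -> R) : Prop :=
  0 <= x /\ (forall i, 0 <= M i) /\ inX M.

Definition distX (x : R) (M : nat -> R) (x' : R) (M' : nat -> R) : R :=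
  Rabs (x - x') + Series (fun i => (INR i + 1) * Rabs (M i - M' i)).

Definition sumM (M : nat -> R) : R := Series M.
Definition sumiM_tail (N : nat) (M : nat -> R) : R :=
  Series (fun j => INR (j + N + 1) * M (j + N + 1)%nat).
Definition sumM_tail (N : nat) (M : nat -> R) : R :=
  Series (fun j => M (j + N)%nat).

Definition rhs_x (N : nat) (k alpha : R) (x : R) (M : nat -> R) : R :=
  alpha - k * x * sumM M + sumiM_tail N M.

Definition rhs_M (k r : R) (x : R) (M : nat -> R) (i : nat) : R :=
  match i with
  | O => r - k * x * M O - M O
  | S j => k * x * M j - k * x * M (S j) - M (S j)
  end.

Definition is_equilibrium_S (N : nat) (k r alpha : R) (x : R) (M : nat -> R) : Prop :=
  inXplus x M /\ rhs_x N k alpha x M = 0 /\ (forall i, rhs_M k r x M i = 0).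

Definition is_solution_S (N : nat) (k r alpha : R)
    (x : R -> R) (M : R -> nat -> R) : Prop :=
  (forall t, 0 <= t -> inXplus (x t) (M t)) /\
  (forall t0, 0 <= t0 -> forall eps, 0 < eps -> exists delta, 0 < delta /\
     forall t, 0 <= t -> Rabs (t - t0) < delta ->
       distX (x t) (M t) (x t0) (M t0) < eps) /\
  (forall t, 0 < t -> is_derive x t (rhs_x N k alpha (x t) (M t))) /\
  (forall t, 0 < t -> forall i,
       is_derive (fun s => M s i) t (rhs_M k r (x t) (M t) i)).

(* Vectors of R^(N+5) are represented by U : nat -> R using the coordinates
   U 1, ..., U (N+5) (1-based, as in the paper); other coordinates are ignored. *)
Definition Fvec (N : nat) (k r alpha : R) (U : nat -> R) (j : nat) : R :=
  match j with
  | 1%nat => alpha + U 3%nat - k * U 1%nat * U 2%nat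
  | 2%nat => r - U 2%nat
  | 3%nat => - U 3%nat + k * U 1%nat * U 4%nat + INR N * k * U 1%nat * U (N + 5)%nat
  | 4%nat => - U 4%nat + k * U 1%nat * U (N + 4)%nat
  | 5%nat => r - U 5%nat - k * U 1%nat * U 5%nat
  | _ => - U j + k * U 1%nat * U (j - 1)%nat - k * U 1%nat * U j
  end.

Definition distF (N : nat) (U V : nat -> R) : R :=
  sum_f_R0 (fun j => Rabs (U (S j) - V (S j))) (N + 4).

Definition in_coords (N j : nat) : Prop := (1 <= j <= N + 5)%nat.

Definition is_solution_F (N : nat) (k r alpha : R) (U : R -> nat -> R) : Prop :=
  (forall j, in_coords N j -> forall eps, 0 < eps -> exists delta, 0 < delta /\
     forall t, 0 <= t < delta -> Rabs (U t j - U 0 j) < eps) /\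
  (forall t, 0 < t -> forall j, in_coords N j ->
     is_derive (fun s => U s j) t (Fvec N k r alpha (U t) j)).

Definition loc_exp_stable (N : nat) (k r alpha : R) (Ueq : nat -> R) : Prop :=
  (forall j, in_coords N j -> Fvec N k r alpha Ueq j = 0) /\
  exists delta C gamma, 0 < delta /\ 0 < C /\ 0 < gamma /\
   (forall U0 : nat -> R, distF N U0 Ueq < delta ->
      exists U, is_solution_F N k r alpha U /\
                (forall j, in_coords N j -> U 0 j = U0 j)) /\
   (forall U, is_solution_F N k r alpha U -> distF N (U 0) Ueq < delta ->
      forall t, 0 <= t ->
        distF N (U t) Ueq <= C * exp (- gamma * t) * distF N (U 0) Ueq).

(* the equilibrium of the finite system corresponding to (x, M) in X_+:
   (x, u, v, w, M_0, ..., M_N) at coordinates 1, 2, 3, 4, 5, ..., N+5 *)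
Definition reduce (N : nat) (x : R) (M : nat -> R) : nat -> R :=
  fun j => match j with
  | 1%nat => x
  | 2%nat => sumM M
  | 3%nat => sumiM_tail N M
  | 4%nat => sumM_tail N M
  | _ => M (j - 5)%nat
  end.

(* Main.v *)
Require Import Defs.
From Stdlib Require Import Reals Lra Lia.
From Coquelicot Require Import Coquelicot.
Open Scope R_scope.

Fixpoint fs (a : nat -> R) (m : nat) : R :=
  match m with O => 0 | S m' => fs a m' + a m' end.

Lemma fs_ext a b m : (forall j, (j < m)%nat -> a j = b j) -> fs a m = fs b m.
Proof. induction m; simpl; intros H; auto. rewrite IHm, H; auto. Qed.

Lemma fs_le a b m : (forall j, (j < m)%nat -> a j <= b j) -> fs a m <= fs b m.
Proof. induction m; simpl; intros H. lra. assert (fs a m <= fs b m) by auto. specialize (H m). assert (a m <= b m) by auto. lra. Qed.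

Lemma fs_plus a b m : fs (fun j => a j + b j) m = fs a m + fs b m.
Proof. induction m; simpl; lra. Qed.
Lemma fs_minus a b m : fs (fun j => a j - b j) m = fs a m - fs b m.
Proof. induction m; simpl; lra. Qed.
Lemma fs_scal c a m : fs (fun j => c * a j) m = c * fs a m.
Proof. induction m; simpl; try rewrite IHm; ring. Qed.
Lemma fs_abs a m : Rabs (fs a m) <= fs (fun j => Rabs (a j)) m.
Proof. induction m; simpl. rewrite Rabs_R0; lra.
 eapply Rle_trans. apply Rabs_triang. lra. Qed.
Lemma fs_nonneg a m : (forall j, 0 <= a j) -> 0 <= fs a m.
Proof. intros H; induction m; simpl. lra. specialize (H m); lra. Qed.
Lemma fs_const_le a m c : (forall j, (j < m)%nat -> a j <= c) -> fs a m <= INR m * c.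
Proof. induction m; intros H. simpl; lra. rewrite S_INR; simpl fs.
 assert (fs a m <= INR m * c) by auto. assert (a m <= c) by auto. lra. Qed.
Lemma fs_split a m p : fs a (m + p) = fs a m + fs (fun j => a (j + m)%nat) p.
Proof. induction p; simpl. rewrite Nat.add_0_r; lra.
 rewrite Nat.add_succ_r; simpl. rewrite IHp. rewrite (Nat.add_comm p m). lra. Qed.
Lemma fs_term_le a m i : (forall j, 0 <= a j) -> (i < m)%nat -> a i <= fs a m.
Proof. intros H; induction m; intros Hi. lia. simpl.
 destruct (Nat.eq_dec i m). subst. pose proof (fs_nonneg a m H); lra.
 assert (a i <= fs a m) by (apply IHm; lia). specialize (H m); lra. Qed.
Lemma fs_mono a m p : (forall j, 0 <= a j) -> (m <= p)%nat -> fs a m <= fs a p.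
Proof. intros H Hp. replace p with (m + (p - m))%nat by lia. rewrite fs_split.
 pose proof (fs_nonneg (fun j => a (j+m)%nat) (p-m) (fun j => H _)); lra. Qed.

Lemma fs_sum_n a m : fs a (S m) = sum_n a m.
Proof. induction m. simpl. rewrite sum_O. lra.
 rewrite sum_Sn. change (fs a (S (S m))) with (fs a (S m) + a (S m)). rewrite IHm. reflexivity. Qed.

Lemma is_lim_fs a : ex_series a -> is_lim_seq (fun m => fs a m) (Series a).
Proof. intros H. apply is_lim_seq_incr_1.
 apply is_lim_seq_ext with (sum_n a). intros n; rewrite fs_sum_n; auto.
 apply Series_correct in H. exact H. Qed.

Lemma ex_series_shift (a : nat -> R) m : ex_series a -> ex_series (fun j => a (j + m)%nat).
Proof. intros H. apply (ex_series_incr_n a m) in H.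
 eapply ex_series_ext; [|exact H]. intros n; simpl. rewrite Nat.add_comm; auto. Qed.

Lemma Series_split a m : ex_series a -> Series a = fs a m + Series (fun j => a (j + m)%nat).
Proof. intros H. induction m. simpl. rewrite Rplus_0_l. apply Series_ext. intros; rewrite Nat.add_0_r; auto.
 rewrite IHm. simpl. rewrite Series_incr_1. simpl.
 rewrite (Series_ext (fun k => a (S (k + m))%nat) (fun j => a (j + S m)%nat)). ring.
 intros; f_equal; lia. apply ex_series_shift; auto. Qed.

Lemma Series_zero : Series (fun _ => 0) = 0.
Proof. rewrite (Series_ext (fun _ => 0) (fun n => 0 * (fun _ => 0) n)). rewrite Series_scal_l. ring.
 intros; simpl; ring. Qed.

Lemma Series_nonneg a : (forall j, 0 <= a j) -> ex_series a -> 0 <= Series a.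
Proof. intros H E. rewrite <- Series_zero. apply Series_le; auto. intros; split; auto; lra. Qed.

Lemma fs_le_Series a m : (forall j, 0 <= a j) -> ex_series a -> fs a m <= Series a.
Proof. intros H E. rewrite (Series_split a m E).
 pose proof (Series_nonneg (fun j => a (j+m)%nat) (fun j => H _) (ex_series_shift a m E)). lra. Qed.

Lemma term_le_Series a i : (forall j, 0 <= a j) -> ex_series a -> a i <= Series a.
Proof. intros H E. eapply Rle_trans. apply (fs_term_le a (S i) i H). lia. apply fs_le_Series; auto. Qed.

Lemma Series_shift_le a m : (forall j, 0 <= a j) -> ex_series a -> Series (fun j => a (j + m)%nat) <= Series a.
Proof. intros H E. rewrite (Series_split a m E). pose proof (fs_nonneg a m H). lra. Qed.

Lemma Series_le_bound a c : ex_series a -> (forall m, fs a m <= c) -> Series a <= c.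
Proof. intros E H. pose proof (is_lim_fs a E).
 assert (Rbar_le (Series a) c). eapply is_lim_seq_le; [|exact H0| apply is_lim_seq_const]. exact H.
 exact H1. Qed.

Lemma Series_abs_le_bound a c : ex_series a -> (forall m, Rabs (fs a m) <= c) -> Rabs (Series a) <= c.
Proof. intros E H. pose proof (is_lim_fs a E). apply is_lim_seq_abs in H0.
 assert (Rbar_le (Rabs (Series a)) c). eapply is_lim_seq_le; [|exact H0| apply is_lim_seq_const]. exact H.
 exact H1. Qed.

Lemma tail_small a : ex_series a -> forall eps, 0 < eps -> exists n0, forall n, (n0 <= n)%nat ->
  Rabs (Series (fun j => a (j + n)%nat)) < eps.
Proof. intros E eps He. pose proof (is_lim_fs a E) as L. apply is_lim_seq_spec in L.
 destruct (L (mkposreal eps He)) as [n0 Hn0]. exists n0. intros n Hn.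
 specialize (Hn0 n Hn). simpl in Hn0. rewrite (Series_split a n E) in Hn0.
 replace (fs a n - (fs a n + Series (fun j => a (j + n)%nat))) with (- Series (fun j => a (j + n)%nat)) in Hn0 by ring.
 rewrite Rabs_Ropp in Hn0; auto. Qed.

Lemma Series_abs_le a : ex_series (fun j => Rabs (a j)) -> Rabs (Series a) <= Series (fun j => Rabs (a j)).
Proof. apply Series_Rabs. Qed.

Lemma ex_series_le_R a b : (forall n, Rabs (a n) <= b n) -> ex_series b -> ex_series a.
Proof. intros H E. apply (ex_series_le a b); auto. Qed.

Lemma fs_derive (f g : nat -> R -> R) m s :
  (forall i, (i < m)%nat -> derivable_pt_lim (f i) s (g i s)) ->
  derivable_pt_lim (fun y => fs (fun i => f i y) m) s (fs (fun i => g i s) m).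
Proof. induction m; intros H; simpl.
 apply derivable_pt_lim_const.
 apply (derivable_pt_lim_plus (fun y => fs (fun i => f i y) m) (f m)). apply IHm; auto. apply H; lia. Qed.

Lemma MVT_bound Q Q' a b K :
  (forall c, Rmin a b <= c <= Rmax a b -> derivable_pt_lim Q c (Q' c)) ->
  (forall c, Rmin a b <= c <= Rmax a b -> Rabs (Q' c) <= K) ->
  Rabs (Q b - Q a) <= K * Rabs (b - a).
Proof. intros HD HB. destruct (Rtotal_order a b) as [Hab|[Hab|Hab]].
 - destruct (MVT_cor2 Q Q' a b Hab) as [c [Hc1 Hc2]].
   intros c Hc. apply HD. rewrite Rmin_left, Rmax_right; lra.
   rewrite Hc1, Rabs_mult. apply Rmult_le_compat_r. apply Rabs_pos. apply HB. rewrite Rmin_left, Rmax_right; lra.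
 - subst. replace (Q b - Q b) with 0 by ring. rewrite Rabs_R0. replace (b - b) with 0 by ring. rewrite Rabs_R0. lra.
 - destruct (MVT_cor2 Q Q' b a Hab) as [c [Hc1 Hc2]].
   intros c Hc. apply HD. rewrite Rmin_right, Rmax_left; lra.
   replace (Q b - Q a) with (- (Q a - Q b)) by ring. rewrite Rabs_Ropp, Hc1, Rabs_mult.
   replace (b - a) with (- (a - b)) by ring. rewrite Rabs_Ropp.
   apply Rmult_le_compat_r. apply Rabs_pos. apply HB. rewrite Rmin_right, Rmax_left; lra.
Qed.

Lemma between_abs t h c : Rmin t (t+h) <= c <= Rmax t (t+h) -> Rabs (c - t) <= Rabs h.
Proof. unfold Rmin, Rmax. intros Hc. destruct (Rle_dec t (t+h)).
 rewrite (Rabs_right h) by lra. apply Rabs_le; lra.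
 rewrite (Rabs_left h) by lra. apply Rabs_le; lra. Qed.

Lemma GDL (f g : nat -> R -> R) t d0 :
  0 < d0 ->
  (forall i s, Rabs (s - t) < d0 -> derivable_pt_lim (f i) s (g i s)) ->
  (forall s, Rabs (s - t) < d0 -> ex_series (fun i => f i s)) ->
  ex_series (fun i => g i t) ->
  (forall eps, 0 < eps -> exists n0 delta, 0 < delta /\
     forall s, Rabs (s - t) < delta -> forall m,
       fs (fun j => Rabs (g (j + n0)%nat s)) m <= eps) ->
  derivable_pt_lim (fun s => Series (fun i => f i s)) t (Series (fun i => g i t)).
Proof.
 intros Hd0 HD HE HG HU eps He.
 destruct (HU (eps/4)) as [n0 [d1 [Hd1 HU1]]]. lra.
 assert (HH := fs_derive f g n0 t (fun i _ => HD i t ltac:(rewrite Rminus_diag, Rabs_R0; lra))).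
 destruct (HH (eps/4)) as [d2 Hd2]. lra.
 assert (Hd : 0 < Rmin d0 (Rmin d1 d2)). apply Rmin_pos; auto. apply Rmin_pos; auto. apply cond_pos.
 exists (mkposreal _ Hd). intros h Hh0 Hh. simpl in Hh.
 assert (Hh1 : Rabs h < d0) by (eapply Rlt_le_trans; [exact Hh|apply Rmin_l]).
 assert (Hh2 : Rabs h < d1) by (eapply Rlt_le_trans; [exact Hh|eapply Rle_trans; [apply Rmin_r|apply Rmin_l]]).
 assert (Hh3 : Rabs h < d2) by (eapply Rlt_le_trans; [exact Hh|eapply Rle_trans; [apply Rmin_r|apply Rmin_r]]).
 assert (Et : ex_series (fun i => f i t)) by (apply HE; rewrite Rminus_diag, Rabs_R0; lra).
 assert (Eth : ex_series (fun i => f i (t+h))) by (apply HE; replace (t+h-t) with h by ring; auto).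
 rewrite (Series_split _ n0 Et), (Series_split _ n0 Eth), (Series_split _ n0 HG).
 set (Tg := Series (fun j => g (j + n0)%nat t)).
 set (T1 := Series (fun j => f (j + n0)%nat (t+h))).
 set (T0 := Series (fun j => f (j + n0)%nat t)).
 assert (HTg : Rabs Tg <= eps/4).
 { apply Series_abs_le_bound. apply (ex_series_shift (fun i => g i t)); auto.
   intros m. eapply Rle_trans. apply fs_abs. apply HU1. rewrite Rminus_diag, Rabs_R0; lra. }
 assert (HT : Rabs (T1 - T0) <= eps/4 * Rabs h).
 { unfold T1, T0. rewrite <- Series_minus by (first [apply (ex_series_shift (fun i => f i (t+h))) | apply (ex_series_shift (fun i => f i t))]; auto).
   apply Series_abs_le_bound.
   apply (ex_series_ext (fun n => plus (f (n + n0)%nat (t+h)) (opp (f (n+n0)%nat t)))).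
   intros; reflexivity. apply (ex_series_minus (fun n => f (n+n0)%nat (t+h)) (fun n => f (n+n0)%nat t)); [apply (ex_series_shift (fun i => f i (t+h))) | apply (ex_series_shift (fun i => f i t))]; auto.
   intros m. rewrite fs_minus.
   replace (Rabs h) with (Rabs ((t+h) - t)) by (f_equal; ring).
   apply (MVT_bound (fun y => fs (fun j => f (j+n0)%nat y) m) (fun y => fs (fun j => g (j+n0)%nat y) m)).
   - intros c Hc. apply (fs_derive (fun j => f (j+n0)%nat) (fun j => g (j+n0)%nat)). intros i _. apply HD.
     assert (Rabs (c - t) <= Rabs h). apply between_abs; auto. lra.
   - intros c Hc. eapply Rle_trans. apply fs_abs. apply HU1.
     assert (Rabs (c - t) <= Rabs h). apply between_abs; auto. lra. }
 specialize (Hd2 h Hh0 Hh3). simpl in Hd2.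
 set (A := (fs (fun i => f i (t + h)) n0 - fs (fun i => f i t) n0) / h - fs (fun i => g i t) n0) in *.
 replace ((fs (fun i => f i (t + h)) n0 + T1 - (fs (fun i => f i t) n0 + T0)) / h - (fs (fun i => g i t) n0 + Tg))
   with (A + (T1 - T0) / h - Tg) by (unfold A; field; auto).
 assert (Rabs ((T1 - T0)/h) <= eps/4).
 { unfold Rdiv. rewrite Rabs_mult, Rabs_inv. apply (Rmult_le_reg_r (Rabs h)). apply Rabs_pos_lt; auto.
   rewrite Rmult_assoc, Rinv_l. lra. apply Rabs_no_R0; auto. }
 eapply Rle_lt_trans. apply Rabs_triang. rewrite Rabs_Ropp.
 eapply Rle_lt_trans. apply Rplus_le_compat_r. apply Rabs_triang. lra.
Qed.

Lemma dpl_cont f x l : derivable_pt_lim f x l -> forall eps, 0 < eps -> exists d, 0 < d /\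
  forall y, Rabs (y - x) < d -> Rabs (f y - f x) < eps.
Proof. intros H. assert (C : continuity_pt f x). apply derivable_continuous_pt. exists l; exact H.
 intros eps He. destruct (C eps He) as [d [Hd Hy]]. exists d; split; auto.
 intros y Hy'. destruct (Req_dec y x). subst. rewrite Rminus_diag, Rabs_R0; auto.
 apply (Hy y). split. split. exact I. auto. exact Hy'. Qed.

Lemma stay_nonpos (z z' : R -> R) T :
  (forall t, T <= t -> derivable_pt_lim z t (z' t)) ->
  (forall t, T <= t -> 0 < z t -> z' t < 0) -> z T <= 0 -> forall t, T <= t -> z t <= 0.
Proof.
 intros HD HN H0 t1 Ht1. apply Rnot_lt_le. intros Hz1.
 set (E := fun s => T <= s <= t1 /\ z s <= 0).
 assert (Hb : bound E). exists t1. intros s [Hs _]. lra.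
 assert (Hne : exists s, E s). exists T. split; auto. lra.
 destruct (completeness E Hb Hne) as [ss [Hub Hlub]].
 assert (HT : T <= ss). apply Hub. split; auto; lra.
 assert (Hs1 : ss <= t1). apply Hlub. intros s [Hs _]; lra.
 assert (Hzs : z ss <= 0).
 { apply Rnot_lt_le. intros Hp.
   destruct (dpl_cont z ss (z' ss) (HD ss HT) (z ss / 2)) as [d [Hd Hy]]. lra.
   assert (ss <= ss - d/2). apply Hlub. intros s [Hs Hs'].
   apply Rnot_lt_le. intros Hlt. assert (s <= ss) by (apply Hub; split; auto).
   assert (Rabs (s - ss) < d) by (apply Rabs_def1; lra). specialize (Hy s H1).
   apply Rabs_def2 in Hy. lra. lra. }
 assert (Hlt : ss < t1). destruct (Rle_lt_or_eq_dec _ _ Hs1); auto. subst; lra.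
 destruct (MVT_cor2 z z' ss t1 Hlt) as [c [Hc1 Hc2]].
 intros c Hc. apply HD; lra.
 assert (Hzc : 0 < z c). apply Rnot_le_lt. intros Hle. assert (c <= ss) by (apply Hub; split; [lra|auto]). lra.
 specialize (HN c ltac:(lra) Hzc). assert (z' c * (t1 - ss) < 0). apply Rmult_neg_pos; lra. lra.
Qed.

Lemma dpl_w B gam T t : derivable_pt_lim (fun t => B * exp (- gam * (t - T))) t (- gam * (B * exp (- gam * (t - T)))).
Proof. apply is_derive_Reals. auto_derive; auto. unfold Rminus; ring. Qed.

Lemma Rabs_def2b x b : Rabs x <= b -> -b <= x <= b.
Proof. unfold Rabs; destruct (Rcase_abs x); intros; lra. Qed.

Lemma barrier_up (y a h : R -> R) T B gam :
  (forall t, T <= t -> derivable_pt_lim y t (-(1 + a t) * y t + h t)) ->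
  (forall t, T <= t -> 0 <= a t) ->
  (forall t, T <= t -> h t <= (a t + (1 - gam)) * (B * exp (-gam*(t - T)))) ->
  y T <= B ->
  forall t, T <= t -> y t <= B * exp (-gam*(t-T)).
Proof. intros HD Ha Hh H0 t Ht.
 assert (Z := stay_nonpos (fun t => y t - B * exp (-gam*(t-T)))
   (fun t => (-(1 + a t) * y t + h t) - (- gam * (B * exp (- gam * (t - T))))) T).
 assert (forall t, T <= t -> y t - B * exp (-gam*(t-T)) <= 0).
 apply Z. intros s Hs. apply derivable_pt_lim_minus. auto. apply dpl_w.
 intros s Hs Hp. specialize (Hh s Hs). specialize (Ha s Hs).
 set (w := B * exp (-gam*(s-T))) in *.
 assert ((1 + a s) * (w - y s) < 0). apply Rmult_pos_neg; lra. nra.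
 replace (T - T) with 0 by ring. rewrite Rmult_0_r, exp_0. lra.
 specialize (H t Ht). lra. Qed.

Lemma barrier (y a h : R -> R) T B gam :
  (forall t, T <= t -> derivable_pt_lim y t (-(1 + a t) * y t + h t)) ->
  (forall t, T <= t -> 0 <= a t) ->
  (forall t, T <= t -> Rabs (h t) <= (a t + (1 - gam)) * (B * exp (-gam*(t - T)))) ->
  Rabs (y T) <= B ->
  forall t, T <= t -> Rabs (y t) <= B * exp (-gam*(t-T)).
Proof. intros HD Ha Hh H0 t Ht. apply Rabs_le. split.
 - assert (- y t <= B * exp (-gam*(t-T))); [|lra].
   apply (barrier_up (fun t => - y t) a (fun t => - h t) T B gam); auto.
   intros s Hs. specialize (HD s Hs). apply derivable_pt_lim_opp in HD.
   replace (- (-(1 + a s) * y s + h s)) with (-(1 + a s) * - y s + - h s) in HD by ring. exact HD.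
   intros s Hs. specialize (Hh s Hs). apply Rabs_def2b in Hh. lra.
   apply Rabs_def2b in H0; lra.
 - apply (barrier_up y a h T B gam); auto.
   intros s Hs. specialize (Hh s Hs). apply Rabs_def2b in Hh. lra.
   apply Rabs_def2b in H0; lra.
Qed.

Lemma inX_W (Mv : nat -> R) : (forall i, 0 <= Mv i) -> inX Mv -> ex_series (fun i => (INR i + 1) * Mv i).
Proof. intros H E. eapply ex_series_ext; [|exact E]. intros n; simpl. rewrite Rabs_pos_eq; auto. Qed.

Lemma INR_nonneg1 i : 0 < INR i + 1.
Proof. pose proof (pos_INR i); lra. Qed.

Lemma rhs_bound k r x0 Mv i c : 0 < k -> (forall j, 0 <= Mv j) -> 0 <= c <= INR (S i) + 1 ->
 Rabs (c * rhs_M k r x0 Mv (S i)) <=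
   2*k*Rabs x0 * ((INR i + 1) * Mv i) + (k*Rabs x0 + 1) * ((INR (S i) + 1) * Mv (S i)).
Proof. intros Hk HM Hc. simpl rhs_M. rewrite S_INR in *.
 pose proof (HM i). pose proof (HM (S i)). pose proof (pos_INR i). pose proof (Rabs_pos x0).
 rewrite Rabs_mult, (Rabs_pos_eq c) by lra.
 assert (Rabs (k * x0 * Mv i - k * x0 * Mv (S i) - Mv (S i)) <= k * Rabs x0 * Mv i + (k * Rabs x0 + 1) * Mv (S i)).
 { eapply Rle_trans. apply Rabs_triang. rewrite Rabs_Ropp. eapply Rle_trans. apply Rplus_le_compat_r. apply Rabs_triang.
   rewrite Rabs_Ropp, !Rabs_mult, (Rabs_pos_eq k), (Rabs_pos_eq (Mv i)), (Rabs_pos_eq (Mv (S i))) by lra. lra. }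
 eapply Rle_trans. apply Rmult_le_compat_l. lra. exact H3.
 assert (c * (k * Rabs x0 * Mv i) <= 2 * k * Rabs x0 * ((INR i + 1) * Mv i)).
 { replace (c * (k * Rabs x0 * Mv i)) with ((k * Rabs x0 * Mv i) * c) by ring.
   replace (2 * k * Rabs x0 * ((INR i + 1) * Mv i)) with ((k * Rabs x0 * Mv i) * (2 * (INR i + 1))) by ring.
   apply Rmult_le_compat_l. apply Rmult_le_pos; [apply Rmult_le_pos|]; lra. lra. }
 assert (c * ((k * Rabs x0 + 1) * Mv (S i)) <= (k * Rabs x0 + 1) * ((INR i + 1 + 1) * Mv (S i))).
 { replace (c * ((k * Rabs x0 + 1) * Mv (S i))) with (((k * Rabs x0 + 1) * Mv (S i)) * c) by ring.
   replace ((k * Rabs x0 + 1) * ((INR i + 1 + 1) * Mv (S i))) with (((k * Rabs x0 + 1) * Mv (S i)) * (INR i + 1 + 1)) by ring.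
   apply Rmult_le_compat_l. apply Rmult_le_pos; [|lra]. assert (0 <= k * Rabs x0) by (apply Rmult_le_pos; lra). lra. lra. }
 lra. Qed.

Lemma tail_unif N k r alpha x M t : is_solution_S N k r alpha x M -> 0 <= t ->
  forall eta, 0 < eta -> exists n1 d, 0 < d /\ forall n, (n1 <= n)%nat -> forall s, 0 <= s -> Rabs (s - t) < d ->
   Series (fun j => (INR (j + n) + 1) * M s (j + n)%nat) <= eta.
Proof. intros [Hpos [Hcont _]] Ht eta He.
 destruct (Hpos t Ht) as [_ [HMt EMt]].
 assert (EW := inX_W _ HMt EMt).
 destruct (tail_small _ EW (eta/2)) as [n1 Hn1]. lra.
 destruct (Hcont t Ht (eta/2)) as [d [Hd Hds]]. lra.
 exists n1, d. split; auto. intros n Hn s Hs Hst.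
 destruct (Hpos s Hs) as [_ [HMs EMs]].
 specialize (Hds s Hs Hst). specialize (Hn1 n Hn).
 assert (ED : ex_series (fun i => (INR i + 1) * Rabs (M s i - M t i))).
 { apply (ex_series_le_R _ (fun i => (INR i + 1) * Rabs (M s i) + (INR i + 1) * Rabs (M t i))).
   intros i. rewrite Rabs_pos_eq. rewrite <- Rmult_plus_distr_l. apply Rmult_le_compat_l.
   pose proof (INR_nonneg1 i); lra. unfold Rminus; eapply Rle_trans. apply Rabs_triang. rewrite Rabs_Ropp; lra.
   apply Rmult_le_pos. pose proof (INR_nonneg1 i); lra. apply Rabs_pos.
   apply (ex_series_plus (fun i => (INR i + 1) * Rabs (M s i)) (fun i => (INR i + 1) * Rabs (M t i))); auto. }
 assert (Series (fun j => (INR (j + n) + 1) * M s (j + n)%nat) <=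
         Series (fun j => (INR (j + n) + 1) * M t (j + n)%nat + (INR (j + n) + 1) * Rabs (M s (j+n)%nat - M t (j+n)%nat))).
 { apply Series_le. intros j. split. apply Rmult_le_pos. pose proof (INR_nonneg1 (j+n)); lra. apply HMs.
   rewrite <- Rmult_plus_distr_l. apply Rmult_le_compat_l. pose proof (INR_nonneg1 (j+n)); lra.
   pose proof (Rabs_triang_inv (M s (j+n)%nat) (M t (j+n)%nat)). rewrite (Rabs_pos_eq (M s _)) in H by auto.
   rewrite (Rabs_pos_eq (M t _)) in H by auto. lra.
   apply (ex_series_plus (fun j => (INR (j + n) + 1) * M t (j + n)%nat) (fun j => (INR (j + n) + 1) * Rabs (M s (j+n)%nat - M t (j+n)%nat))).
   apply (ex_series_shift (fun i => (INR i + 1) * M t i)); auto.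
   apply (ex_series_shift (fun i => (INR i + 1) * Rabs (M s i - M t i))); auto. }
 rewrite Series_plus in H.
 2: apply (ex_series_shift (fun i => (INR i + 1) * M t i)); auto.
 2: apply (ex_series_shift (fun i => (INR i + 1) * Rabs (M s i - M t i))); auto.
 assert (Series (fun j => (INR (j + n) + 1) * Rabs (M s (j+n)%nat - M t (j+n)%nat)) <=
         Series (fun i => (INR i + 1) * Rabs (M s i - M t i))).
 { apply (Series_shift_le (fun i => (INR i + 1) * Rabs (M s i - M t i))); auto.
   intros; apply Rmult_le_pos. pose proof (INR_nonneg1 j); lra. apply Rabs_pos. }
 unfold distX in Hds. pose proof (Rabs_pos (x s - x t)).
 apply Rabs_def2 in Hn1. lra. Qed.

Lemma deriv_series N k r alpha x M p c t : is_solution_S N k r alpha x M -> 0 < k -> 0 < t ->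
 (forall i, 0 <= c i <= INR i + 1) ->
 derivable_pt_lim (fun s => Series (fun j => c (j+p)%nat * M s (j+p)%nat)) t
   (Series (fun j => c (j+p)%nat * rhs_M k r (x t) (M t) (j+p)%nat)).
Proof.
 intros HS Hk Ht Hc. pose proof HS as [Hpos [Hcont [Hdx HdM]]].
 assert (EW : forall s, 0 <= s -> ex_series (fun i => (INR i + 1) * M s i)).
 { intros s Hs. destruct (Hpos s Hs) as [_ [A B]]. apply inX_W; auto. }
 assert (HMn : forall s i, 0 <= s -> 0 <= M s i). { intros s i Hs. destruct (Hpos s Hs) as [_ [A B]]; auto. }
 assert (Hg : forall s j, 0 <= s -> Rabs (c (S j + p)%nat * rhs_M k r (x s) (M s) (S j + p)%nat) <=
     2*k*Rabs (x s) * ((INR (j+p) + 1) * M s (j+p)%nat) + (k*Rabs (x s) + 1) * ((INR (S (j+p)) + 1) * M s (S (j+p)))).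
 { intros s j Hs. replace (S j + p)%nat with (S (j+p)) by lia. apply rhs_bound; auto. }
 apply (GDL (fun j s => c (j+p)%nat * M s (j+p)%nat) (fun j s => c (j+p)%nat * rhs_M k r (x s) (M s) (j+p)%nat) t t); auto.
 - intros i s Hs. assert (0 < s) by (apply Rabs_def2 in Hs; lra).
   apply (derivable_pt_lim_scal (fun s => M s (i+p)%nat)). apply is_derive_Reals. apply HdM; auto.
 - intros s Hs. assert (0 <= s) by (apply Rabs_def2 in Hs; lra).
   apply (ex_series_le_R _ (fun j => (INR (j+p) + 1) * M s (j+p)%nat)).
   intros j. rewrite Rabs_mult, !Rabs_pos_eq. apply Rmult_le_compat_r. apply HMn; auto. apply Hc.
   apply HMn; auto. apply Hc.
   apply (ex_series_shift (fun i => (INR i + 1) * M s i)); auto.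
 - apply ex_series_incr_1.
   apply (ex_series_le_R _ (fun j => 2*k*Rabs (x t) * ((INR (j+p) + 1) * M t (j+p)%nat) + (k*Rabs (x t) + 1) * ((INR (j + S p) + 1) * M t (j + S p)%nat))).
   intros j. replace (j + S p)%nat with (S (j+p)) by lia. apply (Hg t j). lra.
   apply (ex_series_plus (fun j => 2*k*Rabs (x t) * ((INR (j+p) + 1) * M t (j+p)%nat)) (fun j => (k*Rabs (x t) + 1) * ((INR (j + S p) + 1) * M t (j + S p)%nat))).
   apply (ex_series_scal_l (2*k*Rabs (x t)) (fun j => ((INR (j+p) + 1) * M t (j+p)%nat))).
   apply (ex_series_shift (fun i => (INR i + 1) * M t i)); auto. apply EW; lra.
   apply (ex_series_scal_l (k*Rabs (x t) + 1) (fun j => ((INR (j + S p) + 1) * M t (j + S p)%nat))).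
   apply (ex_series_shift (fun i => (INR i + 1) * M t i)); auto. apply EW; lra.
 - intros eps He. set (X := Rabs (x t) + 1).
   assert (HX : 0 < 3 * k * X + 1). { unfold X; pose proof (Rabs_pos (x t)). assert (0 <= k * (Rabs (x t) + 1)) by (apply Rmult_le_pos; lra). lra. }
   destruct (tail_unif N k r alpha x M t HS ltac:(lra) (eps / (3*k*X+1))) as [n1 [d [Hd Htl]]].
   apply Rdiv_lt_0_compat; auto.
   assert (Hxd := dpl_cont x t _ (proj1 (is_derive_Reals _ _ _) (Hdx t Ht)) 1 ltac:(lra)).
   destruct Hxd as [d' [Hd' Hx']].
   exists (S n1), (Rmin d (Rmin d' t)). split. apply Rmin_pos; auto. apply Rmin_pos; auto.
   intros s Hs m.
   assert (Hs1 : Rabs (s - t) < d) by (eapply Rlt_le_trans; [exact Hs|apply Rmin_l]).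
   assert (Hs2 : Rabs (s - t) < d') by (eapply Rlt_le_trans; [exact Hs|eapply Rle_trans; [apply Rmin_r|apply Rmin_l]]).
   assert (Hs3 : Rabs (s - t) < t) by (eapply Rlt_le_trans; [exact Hs|eapply Rle_trans; [apply Rmin_r|apply Rmin_r]]).
   assert (Hs0 : 0 <= s) by (apply Rabs_def2 in Hs3; lra).
   assert (HxX : Rabs (x s) <= X). { specialize (Hx' s Hs2). unfold X. pose proof (Rabs_triang_inv (x s) (x t)). lra. }
   eapply Rle_trans. apply fs_le. intros j _.
   replace (j + S n1)%nat with (S (j + n1)) by lia. apply (Hg s (j + n1)%nat Hs0).
   rewrite fs_plus, fs_scal, fs_scal.
   assert (T1 : fs (fun j => (INR (j + n1 + p) + 1) * M s (j + n1 + p)%nat) m <= eps / (3*k*X+1)).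
   { eapply Rle_trans. 2: apply (Htl (n1 + p)%nat); try lia; auto.
     eapply Rle_trans. 2: apply (fs_le_Series (fun j => (INR (j + (n1 + p)) + 1) * M s (j + (n1 + p))%nat) m).
     right. apply fs_ext. intros; rewrite Nat.add_assoc; auto.
     intros; apply Rmult_le_pos. pose proof (INR_nonneg1 (j + (n1+p))); lra. apply HMn; auto.
     apply (ex_series_shift (fun i => (INR i + 1) * M s i)); auto. all: auto. }
   assert (T2 : fs (fun j => (INR (S (j + n1 + p)) + 1) * M s (S (j + n1 + p))) m <= eps / (3*k*X+1)).
   { eapply Rle_trans. 2: apply (Htl (S (n1 + p))); try lia; auto.
     eapply Rle_trans. 2: apply (fs_le_Series (fun j => (INR (j + S (n1 + p)) + 1) * M s (j + S (n1 + p))%nat) m).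
     right. apply fs_ext. intros; replace (j + S (n1 + p))%nat with (S (j + n1 + p)) by lia; auto.
     intros; apply Rmult_le_pos. pose proof (INR_nonneg1 (j + S (n1+p))); lra. apply HMn; auto.
     apply (ex_series_shift (fun i => (INR i + 1) * M s i)); auto. all: auto. }
   assert (0 <= fs (fun j => (INR (j + n1 + p) + 1) * M s (j + n1 + p)%nat) m).
   { apply fs_nonneg. intros; apply Rmult_le_pos. pose proof (INR_nonneg1 (j + n1 + p)); lra. apply HMn; auto. }
   assert (0 <= fs (fun j => (INR (S (j + n1 + p)) + 1) * M s (S (j + n1 + p))) m).
   { apply fs_nonneg. intros; apply Rmult_le_pos. pose proof (INR_nonneg1 (S (j + n1 + p))); lra. apply HMn; auto. }
   replace (fun j => (INR (j + n1 + p) + 1) * M s (j + n1 + p)%nat) with (fun j => (INR (j + n1 + p) + 1) * M s (j + n1 + p)%nat) by auto.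
   pose proof (Rabs_pos (x s)).
   set (A := fs (fun j => (INR (j + n1 + p) + 1) * M s (j + n1 + p)%nat) m) in *.
   set (B := fs (fun j => (INR (S (j + n1 + p)) + 1) * M s (S (j + n1 + p))) m) in *.
   set (e := eps / (3 * k * X + 1)) in *.
   assert (eps = (3*k*X+1) * e) by (unfold e; field; lra).
   assert (2 * k * Rabs (x s) * A <= 2 * k * X * e). { apply Rmult_le_compat; try lra. apply Rmult_le_pos; lra. apply Rmult_le_compat_l; lra. }
   assert ((k * Rabs (x s) + 1) * B <= (k * X + 1) * e). { apply Rmult_le_compat; try lra. assert (0 <= k * Rabs (x s)) by (apply Rmult_le_pos; lra). lra.
     assert (k * Rabs (x s) <= k * X) by (apply Rmult_le_compat_l; lra). lra. }
   assert (0 <= e) by (unfold e; apply Rlt_le; apply Rdiv_lt_0_compat; lra).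
   assert (k * X * e >= 0). { apply Rle_ge. apply Rmult_le_pos; [apply Rmult_le_pos|]; unfold X; pose proof (Rabs_pos (x t)); lra. }
   nra.
Qed.

Lemma Series_from_fs a (l : R) : is_lim_seq (fun m => fs a m) l -> Series a = l.
Proof. intros H. apply is_series_unique. apply is_lim_seq_incr_1 in H.
 assert (is_lim_seq (sum_n a) l). eapply is_lim_seq_ext; [|exact H]. intros; apply fs_sum_n. exact H0. Qed.

Lemma ex_M_of_W (Mv : nat -> R) : (forall i, 0 <= Mv i) -> ex_series (fun i => (INR i + 1) * Mv i) -> ex_series Mv.
Proof. intros H E. apply (ex_series_le_R _ (fun i => (INR i + 1) * Mv i)); auto.
 intros i. rewrite Rabs_pos_eq by auto. pose proof (pos_INR i). pose proof (H i). nra. Qed.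

Lemma lim_shift0 (u : nat -> R) n : is_lim_seq u 0 -> is_lim_seq (fun m => u (m + n)%nat) 0.
Proof. intros H. apply (is_lim_seq_incr_n u n). auto. Qed.

Lemma lim_fs_shift (a : nat -> R) n : ex_series a -> is_lim_seq (fun m => fs (fun j => a (j + n)%nat) m) (Series (fun j => a (j + n)%nat)).
Proof. intros E. apply is_lim_fs. apply ex_series_shift; auto. Qed.

Lemma tele_u k r x0 (Mv : nat -> R) : (forall i, 0 <= Mv i) -> ex_series (fun i => (INR i + 1) * Mv i) ->
  Series (fun j => rhs_M k r x0 Mv j) = r - sumM Mv.
Proof. intros H E. pose proof (ex_M_of_W Mv H E) as EM.
 apply Series_from_fs. apply is_lim_seq_incr_1.
 apply is_lim_seq_ext with (fun m => r - k * x0 * Mv m - fs Mv (S m)).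
 { intros m. induction m. simpl. ring. change (fs (fun j => rhs_M k r x0 Mv j) (S (S m))) with
     (fs (fun j => rhs_M k r x0 Mv j) (S m) + rhs_M k r x0 Mv (S m)). rewrite <- IHm. simpl. ring. }
 replace (r - sumM Mv) with (r - k * x0 * 0 - sumM Mv) by ring.
 apply is_lim_seq_minus'. apply is_lim_seq_minus'. apply is_lim_seq_const.
 apply is_lim_seq_mult'. apply is_lim_seq_const. apply ex_series_lim_0; auto.
 apply is_lim_seq_incr_1 with (u := fun m => fs Mv m). apply is_lim_fs; auto. Qed.

Lemma tele_w N k r x0 (Mv : nat -> R) : (1 <= N)%nat -> (forall i, 0 <= Mv i) -> ex_series (fun i => (INR i + 1) * Mv i) ->
  Series (fun j => rhs_M k r x0 Mv (j + N)%nat) = k * x0 * Mv (N - 1)%nat - sumM_tail N Mv.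
Proof. intros HN H E. pose proof (ex_M_of_W Mv H E) as EM.
 destruct N as [|N']. lia. replace (S N' - 1)%nat with N' by lia.
 apply Series_from_fs.
 apply is_lim_seq_ext with (fun m => k * x0 * Mv N' - k * x0 * Mv (m + N')%nat - fs (fun j => Mv (j + S N')%nat) m).
 { intros m. induction m. simpl. ring. simpl. rewrite <- IHm. replace (m + S N')%nat with (S (m + N')) by lia. simpl. ring. }
 unfold sumM_tail. replace (k * x0 * Mv N' - Series (fun j => Mv (j + S N')%nat)) with (k * x0 * Mv N' - k * x0 * 0 - Series (fun j => Mv (j + S N')%nat)) by ring.
 apply is_lim_seq_minus'. apply is_lim_seq_minus'. apply is_lim_seq_const.
 apply is_lim_seq_mult'. apply is_lim_seq_const. apply lim_shift0. apply ex_series_lim_0; auto.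
 apply lim_fs_shift; auto. Qed.

Lemma tele_v N k r x0 (Mv : nat -> R) : (forall i, 0 <= Mv i) -> ex_series (fun i => (INR i + 1) * Mv i) ->
  Series (fun j => INR (j + (N + 1)) * rhs_M k r x0 Mv (j + (N + 1))%nat) =
   - sumiM_tail N Mv + k * x0 * sumM_tail N Mv + INR N * k * x0 * Mv N.
Proof. intros H E. pose proof (ex_M_of_W Mv H E) as EM.
 assert (Hw : sumM_tail N Mv = Mv N + Series (fun j => Mv (j + S N)%nat)).
 { unfold sumM_tail. rewrite Series_incr_1. simpl. f_equal. apply Series_ext; intros; f_equal; lia.
   apply (ex_series_shift Mv N); auto. }
 rewrite Hw. apply Series_from_fs.
 apply is_lim_seq_ext with (fun m => k * x0 * ((INR N + 1) * Mv N + fs (fun j => Mv (j + S N)%nat) m - (INR (m + N) + 1) * Mv (m + N)%nat)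
   - fs (fun j => INR (j + N + 1) * Mv (j + N + 1)%nat) m).
 { intros m. induction m. simpl. ring. simpl fs. rewrite <- IHm.
   replace (m + (N + 1))%nat with (S (m + N)) by lia. replace (m + S N)%nat with (S (m + N)) by lia.
   replace (m + N + 1)%nat with (S (m + N)) by lia. replace (S m + N)%nat with (S (m + N)) by lia.
   simpl rhs_M. rewrite !S_INR. ring. }
 unfold sumiM_tail.
 replace (- Series (fun j => INR (j + N + 1) * Mv (j + N + 1)%nat) + k * x0 * (Mv N + Series (fun j => Mv (j + S N)%nat)) + INR N * k * x0 * Mv N)
   with (k * x0 * ((INR N + 1) * Mv N + Series (fun j => Mv (j + S N)%nat) - 0) - Series (fun j => INR (j + N + 1) * Mv (j + N + 1)%nat)) by ring.
 apply is_lim_seq_minus'. apply is_lim_seq_mult'. apply is_lim_seq_const.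
 apply is_lim_seq_minus'. apply is_lim_seq_plus'. apply is_lim_seq_const. apply lim_fs_shift; auto.
 apply (lim_shift0 (fun i => (INR i + 1) * Mv i)). apply ex_series_lim_0; auto.
 apply is_lim_fs. apply (ex_series_le_R _ (fun j => (INR (j + (N+1)) + 1) * Mv (j + (N+1))%nat)).
 intros j. replace (j + N + 1)%nat with (j + (N+1))%nat by lia. rewrite Rabs_pos_eq. pose proof (H (j + (N+1))%nat). lra.
 apply Rmult_le_pos. apply pos_INR. auto.
 apply (ex_series_shift (fun i => (INR i + 1) * Mv i)); auto. Qed.

Lemma dpl_eq f t l l' : derivable_pt_lim f t l -> l = l' -> derivable_pt_lim f t l'.
Proof. intros H ->; auto. Qed.

Lemma reduce_S5 N x0 Mv j : reduce N x0 Mv (S (S (S (S (S j))))) = Mv j.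
Proof. simpl. f_equal. lia. Qed.

Lemma reduced_deriv N k r alpha x M t j : (1 <= N)%nat -> 0 < k -> is_solution_S N k r alpha x M -> 0 < t ->
  in_coords N j ->
  derivable_pt_lim (fun s => reduce N (x s) (M s) j) t (Fvec N k r alpha (reduce N (x t) (M t)) j).
Proof.
 intros HN Hk HS Ht Hj. pose proof HS as [Hpos [Hcont [Hdx HdM]]].
 destruct (Hpos t (Rlt_le _ _ Ht)) as [_ [HMt EMt]]. pose proof (inX_W _ HMt EMt) as EWt.
 assert (HN5 : reduce N (x t) (M t) (N + 5)%nat = M t N).
 { replace (N + 5)%nat with (S (S (S (S (S N))))) by lia. apply reduce_S5. }
 assert (HN4 : reduce N (x t) (M t) (N + 4)%nat = M t (N - 1)%nat).
 { destruct N. lia. replace (S N + 4)%nat with (S (S (S (S (S N))))) by lia. rewrite reduce_S5. f_equal; lia. }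
 unfold in_coords in Hj.
 destruct j as [|[|[|[|[|[|j]]]]]]; try lia.
 - simpl. eapply dpl_eq. apply is_derive_Reals. exact (Hdx t Ht).
   unfold rhs_x. ring.
 - simpl. eapply dpl_eq.
   apply (derivable_pt_lim_ext (fun s => Series (fun j => (fun _ => 1) (j + 0)%nat * M s (j + 0)%nat))).
   intros s. unfold sumM. apply Series_ext. intros n. rewrite Nat.add_0_r. ring.
   apply (deriv_series N k r alpha x M 0 (fun _ => 1) t HS Hk Ht). intros i; pose proof (pos_INR i); lra.
   rewrite <- (tele_u k r (x t) (M t)); auto. apply Series_ext. intros n. rewrite Nat.add_0_r. ring.
 - cbv beta iota. change (reduce N (x t) (M t) 3) with (sumiM_tail N (M t)).
   change (fun s => reduce N (x s) (M s) 3) with (fun s => sumiM_tail N (M s)).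
   change (reduce N (x t) (M t) 4) with (sumM_tail N (M t)).
   change (reduce N (x t) (M t) 1) with (x t). unfold Fvec. cbv beta iota. rewrite HN5.
   change (reduce N (x t) (M t) 3) with (sumiM_tail N (M t)). change (reduce N (x t) (M t) 4) with (sumM_tail N (M t)).
   change (reduce N (x t) (M t) 1) with (x t). eapply dpl_eq.
   apply (derivable_pt_lim_ext (fun s => Series (fun j => INR (j + (N+1))%nat * M s (j + (N+1))%nat))).
   intros s. unfold sumiM_tail. apply Series_ext. intros n. replace (n + N + 1)%nat with (n + (N+1))%nat by lia. auto.
   apply (deriv_series N k r alpha x M (N+1) INR t HS Hk Ht). intros i; pose proof (pos_INR i); lra.
   rewrite (tele_v N k r (x t) (M t)); auto; try ring.
 - cbv beta iota. change (reduce N (x t) (M t) 4) with (sumM_tail N (M t)).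
   change (fun s => reduce N (x s) (M s) 4) with (fun s => sumM_tail N (M s)).
   unfold Fvec. cbv beta iota. rewrite HN4.
   change (reduce N (x t) (M t) 4) with (sumM_tail N (M t)).
   change (reduce N (x t) (M t) 1) with (x t). eapply dpl_eq.
   apply (derivable_pt_lim_ext (fun s => Series (fun j => (fun _ => 1) (j + N)%nat * M s (j + N)%nat))).
   intros s. unfold sumM_tail. apply Series_ext. intros n. ring.
   apply (deriv_series N k r alpha x M N (fun _ => 1) t HS Hk Ht). intros i; pose proof (pos_INR i); lra.
   rewrite (Series_ext _ (fun j => rhs_M k r (x t) (M t) (j + N)%nat)) by (intros; ring).
   rewrite (tele_w N k r (x t) (M t)); auto. ring.
 - simpl. eapply dpl_eq. apply is_derive_Reals. apply (HdM t Ht 0%nat). simpl. ring.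
 - eapply dpl_eq. apply (derivable_pt_lim_ext (fun s => M s (S j))). intros s; rewrite reduce_S5; auto. apply is_derive_Reals. apply (HdM t Ht (S j)).
   unfold Fvec. rewrite !reduce_S5.
   replace (S (S (S (S (S (S j))))) - 1)%nat with (S (S (S (S (S j))))) by lia. rewrite reduce_S5.
   simpl. ring.
Qed.

Lemma shift_dpl f T s l : derivable_pt_lim f (T + s) l -> derivable_pt_lim (fun s => f (T + s)) s l.
Proof. intros H eps He. destruct (H eps He) as [d Hd]. exists d. intros h Hh Hhd.
 rewrite <- Rplus_assoc. apply Hd; auto. Qed.

Lemma shifted_solution N k r alpha x M T : (1 <= N)%nat -> 0 < k -> is_solution_S N k r alpha x M -> 0 < T ->
  is_solution_F N k r alpha (fun s j => reduce N (x (T + s)) (M (T + s)) j).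
Proof. intros HN Hk HS HT. split.
 - intros j Hj eps He. destruct (dpl_cont _ _ _ (reduced_deriv N k r alpha x M T j HN Hk HS HT Hj) eps He) as [d [Hd Hy]].
   exists d. split; auto. intros t [Ht0 Ht1]. rewrite Rplus_0_r. apply Hy. rewrite Rabs_pos_eq; lra.
 - intros t Ht j Hj. apply is_derive_Reals.
   apply (shift_dpl (fun s => reduce N (x s) (M s) j)). apply reduced_deriv; auto. lra.
Qed.

Lemma sumR0_le_const a n c : (forall j, (j <= n)%nat -> a j <= c) -> sum_f_R0 a n <= INR (S n) * c.
Proof. induction n; intros H. simpl. specialize (H 0%nat (le_n _)). lra.
 rewrite S_INR. simpl sum_f_R0. assert (sum_f_R0 a n <= INR (S n) * c) by (apply IHn; intros; apply H; lia).
 specialize (H (S n) (le_n _)). lra. Qed.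

Lemma sumR0_term a n j : (forall j, 0 <= a j) -> (j <= n)%nat -> a j <= sum_f_R0 a n.
Proof. intros H; induction n; intros Hj. replace j with 0%nat by lia. simpl; lra.
 simpl. destruct (Nat.eq_dec j (S n)). subst. pose proof (cond_pos_sum a n H). lra.
 assert (a j <= sum_f_R0 a n) by (apply IHn; lia). specialize (H (S n)). lra. Qed.

Lemma exD (M1 M2 : nat -> R) : inX M1 -> inX M2 -> ex_series (fun i => (INR i + 1) * Rabs (M1 i - M2 i)).
Proof. intros E1 E2. apply (ex_series_le_R _ (fun i => (INR i + 1) * Rabs (M1 i) + (INR i + 1) * Rabs (M2 i))).
 intros i. pose proof (INR_nonneg1 i). rewrite Rabs_pos_eq. rewrite <- Rmult_plus_distr_l. apply Rmult_le_compat_l. lra.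
 unfold Rminus; eapply Rle_trans. apply Rabs_triang. rewrite Rabs_Ropp; lra.
 apply Rmult_le_pos. lra. apply Rabs_pos.
 apply (ex_series_plus (fun i => (INR i + 1) * Rabs (M1 i)) (fun i => (INR i + 1) * Rabs (M2 i))); auto. Qed.

Lemma SD_nonneg (M1 M2 : nat -> R) : inX M1 -> inX M2 -> 0 <= Series (fun i => (INR i + 1) * Rabs (M1 i - M2 i)).
Proof. intros. apply Series_nonneg. intros; apply Rmult_le_pos. pose proof (INR_nonneg1 j); lra. apply Rabs_pos. apply exD; auto. Qed.

Lemma distX_sym x1 M1 x2 M2 : distX x1 M1 x2 M2 = distX x2 M2 x1 M1.
Proof. unfold distX. rewrite Rabs_minus_sym. f_equal. apply Series_ext. intros; rewrite Rabs_minus_sym; auto. Qed.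

Lemma distX_tri x1 M1 x2 M2 x3 M3 : inX M1 -> inX M2 -> inX M3 ->
  distX x1 M1 x3 M3 <= distX x1 M1 x2 M2 + distX x2 M2 x3 M3.
Proof. intros E1 E2 E3. unfold distX.
 assert (Rabs (x1 - x3) <= Rabs (x1 - x2) + Rabs (x2 - x3)).
 { replace (x1 - x3) with ((x1 - x2) + (x2 - x3)) by ring. apply Rabs_triang. }
 assert (Series (fun i => (INR i + 1) * Rabs (M1 i - M3 i)) <=
   Series (fun i => (INR i + 1) * Rabs (M1 i - M2 i) + (INR i + 1) * Rabs (M2 i - M3 i))).
 { apply Series_le. intros n. pose proof (INR_nonneg1 n). split. apply Rmult_le_pos. lra. apply Rabs_pos.
   rewrite <- Rmult_plus_distr_l. apply Rmult_le_compat_l. lra.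
   replace (M1 n - M3 n) with ((M1 n - M2 n) + (M2 n - M3 n)) by ring. apply Rabs_triang.
   apply (ex_series_plus (fun i => (INR i + 1) * Rabs (M1 i - M2 i)) (fun i => (INR i + 1) * Rabs (M2 i - M3 i))); apply exD; auto. }
 rewrite Series_plus in H0 by (apply exD; auto). lra. Qed.

Lemma series_shift_bound (D : nat -> R) (c : nat -> R) p :
  ex_series (fun i => (INR i + 1) * Rabs (D i)) -> (forall j, Rabs (c j) <= INR (j + p) + 1) ->
  Rabs (Series (fun j => c j * D (j + p)%nat)) <= Series (fun i => (INR i + 1) * Rabs (D i)).
Proof. intros E Hc.
 assert (E2 : ex_series (fun j => (INR (j + p) + 1) * Rabs (D (j + p)%nat))).
 { apply (ex_series_shift (fun i => (INR i + 1) * Rabs (D i))); auto. }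
 assert (E3 : ex_series (fun j => Rabs (c j * D (j + p)%nat))).
 { apply (ex_series_le_R _ (fun j => (INR (j + p) + 1) * Rabs (D (j + p)%nat))); auto.
   intros j. rewrite Rabs_Rabsolu, Rabs_mult. apply Rmult_le_compat_r. apply Rabs_pos. auto. }
 eapply Rle_trans. apply Series_Rabs; auto.
 eapply Rle_trans. apply (Series_le _ (fun j => (INR (j + p) + 1) * Rabs (D (j + p)%nat))); auto.
 intros j. split. apply Rabs_pos. rewrite Rabs_mult. apply Rmult_le_compat_r. apply Rabs_pos. auto.
 apply (Series_shift_le (fun i => (INR i + 1) * Rabs (D i))); auto.
 intros; apply Rmult_le_pos. pose proof (INR_nonneg1 j); lra. apply Rabs_pos. Qed.

Lemma ex_shift_c (Mv : nat -> R) (c : nat -> R) p : inX Mv -> (forall j, Rabs (c j) <= INR (j + p) + 1) ->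
  ex_series (fun j => c j * Mv (j + p)%nat).
Proof. intros E Hc. apply (ex_series_le_R _ (fun j => (INR (j + p) + 1) * Rabs (Mv (j + p)%nat))).
 intros j. rewrite Rabs_mult. apply Rmult_le_compat_r. apply Rabs_pos. auto.
 apply (ex_series_shift (fun i => (INR i + 1) * Rabs (Mv i))); auto. Qed.

Lemma diff_shift_bound (M1 M2 : nat -> R) (c : nat -> R) p : inX M1 -> inX M2 -> (forall j, Rabs (c j) <= INR (j + p) + 1) ->
  Rabs (Series (fun j => c j * M1 (j + p)%nat) - Series (fun j => c j * M2 (j + p)%nat))
   <= Series (fun i => (INR i + 1) * Rabs (M1 i - M2 i)).
Proof. intros E1 E2 Hc. rewrite <- Series_minus by (apply ex_shift_c; auto).
 rewrite (Series_ext _ (fun j => c j * (fun i => M1 i - M2 i) (j + p)%nat)) by (intros; simpl; ring).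
 apply (series_shift_bound (fun i => M1 i - M2 i)); auto. apply exD; auto. Qed.

Lemma distF_le N x1 M1 x2 M2 : inX M1 -> inX M2 ->
  distF N (reduce N x1 M1) (reduce N x2 M2) <= (INR N + 5) * distX x1 M1 x2 M2.
Proof. intros E1 E2. unfold distF.
 replace (INR N + 5) with (INR (S (N + 4))) by (rewrite S_INR, plus_INR; simpl; ring).
 apply sumR0_le_const. intros j Hj. pose proof (SD_nonneg M1 M2 E1 E2). pose proof (Rabs_pos (x1 - x2)).
 unfold distX. set (SD := Series (fun i => (INR i + 1) * Rabs (M1 i - M2 i))) in *.
 assert (Hone : forall j0 p, Rabs ((fun _ : nat => 1) j0) <= INR (j0 + p) + 1).
 { intros; rewrite Rabs_R1; pose proof (pos_INR (j0 + p)); lra. }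
 destruct j as [|[|[|[|j]]]].
 - simpl. lra.
 - simpl. unfold sumM.
   rewrite (Series_ext M1 (fun j => (fun _ => 1) j * M1 (j + 0)%nat)) by (intros; rewrite Nat.add_0_r; ring).
   rewrite (Series_ext M2 (fun j => (fun _ => 1) j * M2 (j + 0)%nat)) by (intros; rewrite Nat.add_0_r; ring).
   pose proof (diff_shift_bound M1 M2 (fun _ => 1) 0 E1 E2 (fun j => Hone j 0%nat)). unfold SD; lra.
 - simpl. unfold sumiM_tail.
   rewrite (Series_ext (fun j => INR (j + N + 1) * M1 (j + N + 1)%nat) (fun j => (fun j => INR (j + N + 1)) j * M1 (j + (N+1))%nat)) by (intros; f_equal; f_equal; lia).
   rewrite (Series_ext (fun j => INR (j + N + 1) * M2 (j + N + 1)%nat) (fun j => (fun j => INR (j + N + 1)) j * M2 (j + (N+1))%nat)) by (intros; f_equal; f_equal; lia).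
   assert (Rabs (Series (fun j => (fun j => INR (j + N + 1)) j * M1 (j + (N+1))%nat) - Series (fun j => (fun j => INR (j + N + 1)) j * M2 (j + (N+1))%nat)) <= SD).
   { apply diff_shift_bound; auto. intros j0. rewrite Rabs_pos_eq by apply pos_INR. replace (j0 + N + 1)%nat with (j0 + (N+1))%nat by lia. lra. }
   lra.
 - simpl. unfold sumM_tail.
   rewrite (Series_ext (fun j => M1 (j + N)%nat) (fun j => (fun _ => 1) j * M1 (j + N)%nat)) by (intros; ring).
   rewrite (Series_ext (fun j => M2 (j + N)%nat) (fun j => (fun _ => 1) j * M2 (j + N)%nat)) by (intros; ring).
   pose proof (diff_shift_bound M1 M2 (fun _ => 1) N E1 E2 (fun j => Hone j N)). unfold SD; lra.
 - replace (S (S (S (S (S j))))) with (S (S (S (S (S j))))) by auto. rewrite !reduce_S5.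
   assert (Rabs (M1 j - M2 j) <= (INR j + 1) * Rabs (M1 j - M2 j)).
   { pose proof (pos_INR j). pose proof (Rabs_pos (M1 j - M2 j)). nra. }
   assert ((INR j + 1) * Rabs (M1 j - M2 j) <= SD).
   { apply (term_le_Series (fun i => (INR i + 1) * Rabs (M1 i - M2 i))). intros; apply Rmult_le_pos. pose proof (INR_nonneg1 j0); lra. apply Rabs_pos. apply exD; auto. }
   lra.
Qed.

Lemma Meq_geom k r x0 (Mv : nat -> R) : 0 < k -> 0 <= x0 -> (forall i, rhs_M k r x0 Mv i = 0) ->
  forall j m, Mv (j + m)%nat = (k * x0 / (1 + k * x0)) ^ m * Mv j.
Proof. intros Hk Hx H j m. assert (0 <= k * x0) by (apply Rmult_le_pos; lra).
 induction m. rewrite Nat.add_0_r; simpl; ring.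
 replace (j + S m)%nat with (S (j + m)) by lia. specialize (H (S (j + m))). simpl in H.
 simpl. rewrite Rmult_assoc, <- IHm.
 field_simplify_eq; [|lra]. lra. Qed.

Lemma L_tail N (P : nat -> R) m : (forall i, 0 <= P i) -> inX P ->
  Series (fun j => (INR (j + N + m + 1) + 1) * P (j + N + m + 1)%nat) + fs (fun j => (INR (j + N + 1) + 1) * P (j + N + 1)%nat) m
  = sumiM_tail N P + sumM_tail N P - P N.
Proof. intros H E. pose proof (inX_W P H E) as EW. pose proof (ex_M_of_W P H EW) as EP.
 assert (Hw : sumM_tail N P = P N + Series (fun j => P (j + N + 1)%nat)).
 { unfold sumM_tail. rewrite Series_incr_1. f_equal. apply Series_ext; intros; f_equal; lia.
   apply (ex_series_shift P N); auto. }
 assert (E1 : ex_series (fun j => INR (j + N + 1) * P (j + N + 1)%nat)).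
 { apply (ex_series_le_R _ (fun j => (INR (j + (N+1)) + 1) * P (j + (N+1))%nat)).
   intros j. replace (j + N + 1)%nat with (j + (N+1))%nat by lia. rewrite Rabs_pos_eq. pose proof (H (j + (N+1))%nat). lra.
   apply Rmult_le_pos. apply pos_INR. auto. apply (ex_series_shift (fun i => (INR i + 1) * P i)); auto. }
 assert (E2 : ex_series (fun j => P (j + N + 1)%nat)).
 { apply (ex_series_ext (fun j => P (j + (N+1))%nat)). intros; f_equal; lia. apply (ex_series_shift P); auto. }
 rewrite Hw. unfold sumiM_tail.
 replace (Series (fun j => INR (j + N + 1) * P (j + N + 1)%nat) + (P N + Series (fun j => P (j + N + 1)%nat)) - P N)
   with (Series (fun j => INR (j + N + 1) * P (j + N + 1)%nat) + Series (fun j => P (j + N + 1)%nat)) by ring.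
 rewrite <- Series_plus by auto.
 rewrite (Series_split (fun j => INR (j + N + 1) * P (j + N + 1)%nat + P (j + N + 1)%nat) m).
 2: { apply (ex_series_plus (fun j => INR (j + N + 1) * P (j + N + 1)%nat) (fun j => P (j + N + 1)%nat)); auto. }
 rewrite (Series_ext (fun j => (INR (j + N + m + 1) + 1) * P (j + N + m + 1)%nat)
    (fun j => INR (j + m + N + 1) * P (j + m + N + 1)%nat + P (j + m + N + 1)%nat)).
 rewrite (fs_ext (fun j => (INR (j + N + 1) + 1) * P (j + N + 1)%nat) (fun j => INR (j + N + 1) * P (j + N + 1)%nat + P (j + N + 1)%nat)).
 ring. intros; ring. intros n. replace (n + N + m + 1)%nat with (n + m + N + 1)%nat by lia. ring.
Qed.

Lemma eq_tail_bound k r xeq (Meq : nat -> R) q n : 0 < k -> 0 <= xeq -> (forall i, 0 <= Meq i) -> inX Meq ->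
  (forall i, rhs_M k r xeq Meq i = 0) -> k * xeq / (1 + k * xeq) <= q ->
  Series (fun j => (INR (j + n + 1) + 1) * Meq (j + n + 1)%nat) <=
   (INR n + 2) * q ^ (n + 1) * Series (fun i => (INR i + 1) * Meq i).
Proof. intros Hk Hx HM E Heq Hq. pose proof (inX_W _ HM E) as EW.
 set (rho := k * xeq / (1 + k * xeq)) in *.
 assert (Hrho : 0 <= rho). { unfold rho. assert (0 <= k * xeq) by (apply Rmult_le_pos; lra). apply Rmult_le_pos; auto. apply Rlt_le, Rinv_0_lt_compat; lra. }
 rewrite <- Series_scal_l. apply Series_le.
 - intros j. split. apply Rmult_le_pos. pose proof (INR_nonneg1 (j + n + 1)); lra. auto.
   replace (j + n + 1)%nat with (j + (n + 1))%nat by lia. rewrite (Meq_geom k r xeq Meq Hk Hx Heq j (n+1)).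
   fold rho. rewrite !plus_INR. simpl INR.
   assert (rho ^ (n+1) <= q ^ (n+1)) by (apply pow_incr; lra).
   pose proof (pos_INR j). pose proof (pos_INR n). pose proof (HM j). pose proof (pow_le rho (n+1) Hrho).
   assert ((INR j + INR n + 1 + 1) <= (INR n + 2) * (INR j + 1)) by nra.
   assert (0 <= rho ^ (n+1) * Meq j) by (apply Rmult_le_pos; auto).
   assert ((INR j + INR n + 1 + 1) * (rho ^ (n + 1) * Meq j) <= (INR n + 2) * (INR j + 1) * (rho ^ (n + 1) * Meq j)).
   { apply Rmult_le_compat_r; auto. }
   assert ((INR n + 2) * (INR j + 1) * (rho ^ (n + 1) * Meq j) <= (INR n + 2) * (INR j + 1) * (q ^ (n + 1) * Meq j)).
   { apply Rmult_le_compat_l. nra. apply Rmult_le_compat_r; auto. }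
   nra.
 - apply (ex_series_scal_l ((INR n + 2) * q ^ (n + 1)) (fun i => (INR i + 1) * Meq i)); auto.
Qed.

Lemma pow_exp_ln q m : 0 < q -> q ^ m = exp (INR m * ln q).
Proof. intros Hq. induction m. simpl. rewrite Rmult_0_l, exp_0; auto.
 rewrite S_INR. simpl. rewrite IHm. replace ((INR m + 1) * ln q) with (INR m * ln q + ln q) by ring.
 rewrite exp_plus, exp_ln; auto; ring. Qed.

Lemma poly_exp c0 c1 g s : 0 < c0 -> 0 <= c1 -> 0 < g -> 0 <= s ->
  (c0 + c1 * s) ^ 2 * exp (- g * s) <= (c0 + 4 * c1 / g) ^ 2 * exp (- (g / 2) * s).
Proof. intros H0 H1 Hg Hs.
 set (K := c0 + 4 * c1 / g).
 assert (HK : 0 <= 4 * c1 / g). { apply Rmult_le_pos. lra. apply Rlt_le, Rinv_0_lt_compat; lra. }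
 assert (Hy : 1 + g * s / 4 <= exp (g * s / 4)).
 { destruct (Req_dec (g * s / 4) 0) as [E|E]. rewrite E, exp_0. lra. apply Rlt_le, exp_ineq1; auto. }
 assert (Hlin : c0 + c1 * s <= K * exp (g * s / 4)).
 { eapply Rle_trans with (K * (1 + g * s / 4)). unfold K.
   replace ((c0 + 4 * c1 / g) * (1 + g * s / 4)) with (c0 + c0 * (g * s / 4) + 4 * c1 / g + c1 * s) by (field; lra).
   assert (0 <= c0 * (g * s / 4)). { apply Rmult_le_pos. lra. apply Rmult_le_pos; [apply Rmult_le_pos|]; lra. } lra.
   apply Rmult_le_compat_l. unfold K; lra. auto. }
 assert (0 <= c0 + c1 * s) by nra.
 assert ((c0 + c1 * s) ^ 2 <= (K * exp (g * s / 4)) ^ 2) by (apply pow_incr; lra).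
 replace ((K * exp (g * s / 4)) ^ 2) with (K ^ 2 * exp (g * s / 2)) in H2.
 2: { simpl. rewrite Rmult_1_r. replace (g * s / 2) with (g * s / 4 + g * s / 4) by field. rewrite exp_plus. ring. }
 eapply Rle_trans. apply Rmult_le_compat_r. apply Rlt_le, exp_pos. exact H2.
 rewrite Rmult_assoc, <- exp_plus. fold K. right. f_equal. f_equal. field.
Qed.

Lemma D_bound N k r alpha x M xeq Meq T A gam B :
 0 < k -> is_solution_S N k r alpha x M -> is_equilibrium_S N k r alpha xeq Meq -> 0 < T -> 0 < gam <= 1/2 ->
 0 <= A ->
 (forall t, T <= t -> Rabs (x t - xeq) <= A * exp (-gam*(t-T))) ->
 (forall i, Rabs (M T i - Meq i) <= B) ->
 4 * k * A * Series (fun i => (INR i + 1) * Meq i) <= B ->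
 forall i t, T <= t -> Rabs (M t i - Meq i) <= B * exp (-gam*(t-T)).
Proof.
 intros Hk HS HE HT Hg HA Hx H0 HB. pose proof HS as [Hpos [Hcont [Hdx HdM]]].
 destruct HE as [[Hxe [HMe EMe]] [_ Heq]].
 set (Weq := Series (fun i => (INR i + 1) * Meq i)) in *.
 assert (EWe := inX_W _ HMe EMe).
 assert (HMW : forall i, Meq i <= Weq).
 { intros i. eapply Rle_trans. 2: apply (term_le_Series (fun i => (INR i + 1) * Meq i) i); auto.
   pose proof (pos_INR i). pose proof (HMe i). nra. intros; apply Rmult_le_pos; auto. pose proof (pos_INR j); lra. }
 assert (HW0 : 0 <= Weq) by (eapply Rle_trans; [apply (HMe 0%nat)|apply HMW]).
 assert (Hxt : forall t, T <= t -> 0 <= x t). { intros t Ht. destruct (Hpos t ltac:(lra)) as [H _]; auto. }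
 assert (Hexp : forall t, 0 < exp (-gam*(t-T))) by (intros; apply exp_pos).
 intros i. induction i.
 - apply (barrier (fun t => M t 0%nat - Meq 0%nat) (fun t => k * x t) (fun t => - (k * x t - k * xeq) * Meq 0%nat)); auto.
   + intros t Ht. eapply dpl_eq. apply derivable_pt_lim_minus. apply is_derive_Reals. apply HdM. lra.
     apply derivable_pt_lim_const. specialize (Heq 0%nat). simpl in Heq |- *. lra.
   + intros t Ht. apply Rmult_le_pos; auto; lra.
   + intros t Ht. specialize (Hx t Ht). specialize (Hexp t). pose proof (Hxt t Ht). set (e := exp (-gam*(t-T))) in *.
     rewrite Rabs_mult, Rabs_Ropp, Rabs_pos_eq with (x := Meq 0%nat) by auto.
     replace (k * x t - k * xeq) with (k * (x t - xeq)) by ring. rewrite Rabs_mult, Rabs_pos_eq with (x := k) by lra.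
     pose proof (HMW 0%nat). pose proof (HMe 0%nat). pose proof (Rabs_pos (x t - xeq)).
     assert (k * Rabs (x t - xeq) * Meq 0%nat <= k * (A * e) * Weq).
     { apply Rmult_le_compat; try nra. all: apply Rmult_le_compat_l; lra. }
     assert (0 <= k * x t) by (apply Rmult_le_pos; lra).
     assert (k * (A * e) * Weq <= (1/4) * B * e).
     { replace (k * (A * e) * Weq) with ((k * A * Weq) * e) by ring. replace ((1/4) * B * e) with (((1/4) * B) * e) by ring.
       apply Rmult_le_compat_r; lra. }
     assert (0 <= k*A*Weq) by (apply Rmult_le_pos; [apply Rmult_le_pos|]; lra).
     assert (0 <= B) by lra. assert (0 <= B * e) by (apply Rmult_le_pos; lra).
     assert ((1/2) * (B * e) <= (k * x t + (1 - gam)) * (B * e)) by (apply Rmult_le_compat_r; lra). nra.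
 - apply (barrier (fun t => M t (S i) - Meq (S i)) (fun t => k * x t)
      (fun t => k * x t * (M t i - Meq i) + (k * x t - k * xeq) * (Meq i - Meq (S i)))); auto.
   + intros t Ht. eapply dpl_eq. apply derivable_pt_lim_minus. apply is_derive_Reals. apply HdM. lra.
     apply derivable_pt_lim_const. specialize (Heq (S i)). simpl in Heq |- *. lra.
   + intros t Ht. apply Rmult_le_pos; auto; lra.
   + intros t Ht. specialize (IHi t Ht). specialize (Hx t Ht). specialize (Hexp t). pose proof (Hxt t Ht). set (e := exp (-gam*(t-T))) in *.
     eapply Rle_trans. apply Rabs_triang. rewrite Rabs_mult, (Rabs_mult (k * x t - k * xeq)).
     rewrite Rabs_pos_eq with (x := k * x t) by (apply Rmult_le_pos; lra).
     replace (k * x t - k * xeq) with (k * (x t - xeq)) by ring. rewrite Rabs_mult, Rabs_pos_eq with (x := k) by lra.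
     assert (Rabs (Meq i - Meq (S i)) <= 2 * Weq).
     { unfold Rminus. eapply Rle_trans. apply Rabs_triang. rewrite Rabs_Ropp, !Rabs_pos_eq by auto.
       pose proof (HMW i). pose proof (HMW (S i)). lra. }
     pose proof (Rabs_pos (x t - xeq)). pose proof (Rabs_pos (Meq i - Meq (S i))).
     assert (0 <= k * x t) by (apply Rmult_le_pos; lra).
     assert (k * x t * Rabs (M t i - Meq i) <= k * x t * (B * e)) by (apply Rmult_le_compat_l; auto).
     assert (k * Rabs (x t - xeq) * Rabs (Meq i - Meq (S i)) <= k * (A * e) * (2 * Weq)).
     { apply Rmult_le_compat; try nra. all: apply Rmult_le_compat_l; lra. }
     assert (k * (A * e) * (2 * Weq) <= (1/2) * B * e).
     { replace (k * (A * e) * (2 * Weq)) with ((2 * (k * A * Weq)) * e) by ring. replace ((1/2) * B * e) with (((1/2) * B) * e) by ring.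
       apply Rmult_le_compat_r; lra. }
     assert (0 <= k*A*Weq) by (apply Rmult_le_pos; [apply Rmult_le_pos|]; lra).
     assert (0 <= B) by lra. assert (0 <= B * e) by (apply Rmult_le_pos; lra).
     assert ((1/2) * (B * e) <= (k * x t + (1 - gam)) * (B * e)) by (apply Rmult_le_compat_r; lra). nra.
Qed.

Lemma Rmax0_lip y c : 0 <= c -> Rabs (Rmax 0 y - c) <= Rabs (y - c).
Proof. intros Hc. unfold Rmax. destruct (Rle_dec 0 y). lra.
 rewrite (Rabs_minus_sym 0), (Rabs_minus_sym y).
 rewrite (Rabs_pos_eq (c - 0)) by lra. rewrite (Rabs_pos_eq (c - y)) by lra. lra. Qed.

Lemma compact_bound N k r alpha x M xeq Meq T : is_solution_S N k r alpha x M -> inX Meq -> 0 <= T ->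
  exists Bm, forall t, 0 <= t <= T -> distX (x t) (M t) xeq Meq <= Bm.
Proof. intros [Hpos [Hcont _]] EMe HT.
 set (phi := fun y => distX (x (Rmax 0 y)) (M (Rmax 0 y)) xeq Meq).
 destruct (continuity_ab_maj phi 0 T HT) as [Mx [HMx _]].
 - intros c Hc. intros eps He. destruct (Hcont (Rmax 0 c) (Rmax_l _ _) eps He) as [d [Hd Hdd]].
   exists d. split; auto. intros y [_ Hy]. simpl in Hy. unfold R_dist in *. simpl. unfold R_dist.
   unfold phi. rewrite (Rmax_right 0 c) in * by lra.
   destruct (Hpos (Rmax 0 y) (Rmax_l _ _)) as [_ [_ E1]]. destruct (Hpos c ltac:(lra)) as [_ [_ E2]].
   assert (Hl : Rabs (Rmax 0 y - c) < d) by (eapply Rle_lt_trans; [apply Rmax0_lip; lra|exact Hy]).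
   specialize (Hdd (Rmax 0 y) (Rmax_l _ _) Hl).
   pose proof (distX_tri (x (Rmax 0 y)) (M (Rmax 0 y)) (x c) (M c) xeq Meq E1 E2 EMe).
   pose proof (distX_tri (x c) (M c) (x (Rmax 0 y)) (M (Rmax 0 y)) xeq Meq E2 E1 EMe).
   rewrite (distX_sym (x c) (M c) (x (Rmax 0 y)) (M (Rmax 0 y))) in H0. apply Rabs_def1; lra.
 - exists (phi Mx). intros t Ht. specialize (HMx t Ht). unfold phi in HMx. rewrite Rmax_right in HMx by lra. exact HMx.
Qed.

Lemma distX_split_bound N k r xv (Mv : nat -> R) xeq Meq m a bE z q :
 0 < k -> (forall i, 0 <= Mv i) -> inX Mv -> 0 <= xeq -> (forall i, 0 <= Meq i) -> inX Meq ->
 (forall i, rhs_M k r xeq Meq i = 0) -> k * xeq / (1 + k * xeq) <= q ->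
 (forall i, Rabs (Mv i - Meq i) <= bE) ->
 Rabs (xv - xeq) <= a ->
 Rabs ((sumiM_tail N Mv + sumM_tail N Mv - Mv N) - (sumiM_tail N Meq + sumM_tail N Meq - Meq N)) <= z ->
 distX xv Mv xeq Meq <= a + z + (INR (N+m) + 1) * ((INR (N+m) + 1) * bE) + INR m * ((INR (N + m) + 1) * bE)
   + 2 * ((INR (N+m) + 2) * q ^ (N + m + 1) * Series (fun i => (INR i + 1) * Meq i)).
Proof.
 intros Hk HM EM Hxe HMe EMe Heq Hq HD Hx HZ.
 set (Weq := Series (fun i => (INR i + 1) * Meq i)).
 pose proof (exD Mv Meq EM EMe) as ED. pose proof (inX_W _ HM EM) as EWM. pose proof (inX_W _ HMe EMe) as EWe.
 unfold distX. rewrite (Series_split _ (N + m + 1) ED).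
 assert (F1 : fs (fun i => (INR i + 1) * Rabs (Mv i - Meq i)) (N + m + 1) <= (INR (N+m) + 1) * ((INR (N+m) + 1) * bE)).
 { replace (INR (N+m) + 1) with (INR (N + m + 1)) at 1 by (rewrite plus_INR; simpl; ring).
   apply fs_const_le. intros j Hj. apply Rmult_le_compat. pose proof (INR_nonneg1 j); lra. apply Rabs_pos.
   assert (INR j <= INR (N+m)) by (apply le_INR; lia). lra. auto. }
 set (TM := Series (fun j => (INR (j + N + m + 1) + 1) * Mv (j + N + m + 1)%nat)).
 set (TE := Series (fun j => (INR (j + N + m + 1) + 1) * Meq (j + N + m + 1)%nat)).
 assert (ETM : ex_series (fun j => (INR (j + N + m + 1) + 1) * Mv (j + N + m + 1)%nat)).
 { apply (ex_series_ext (fun j => (INR (j + (N+m+1)) + 1) * Mv (j + (N + m + 1))%nat)). intros n0; replace (n0 + (N+m+1))%nat with (n0+N+m+1)%nat by lia; reflexivity.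
   apply (ex_series_shift (fun i => (INR i + 1) * Mv i)); auto. }
 assert (ETE : ex_series (fun j => (INR (j + N + m + 1) + 1) * Meq (j + N + m + 1)%nat)).
 { apply (ex_series_ext (fun j => (INR (j + (N+m+1)) + 1) * Meq (j + (N + m + 1))%nat)). intros n0; replace (n0 + (N+m+1))%nat with (n0+N+m+1)%nat by lia; reflexivity.
   apply (ex_series_shift (fun i => (INR i + 1) * Meq i)); auto. }
 assert (Tl : Series (fun j => (INR (j + (N + m + 1)) + 1) * Rabs (Mv (j + (N + m + 1))%nat - Meq (j + (N + m + 1))%nat)) <= TM + TE).
 { unfold TM, TE. rewrite <- Series_plus by auto. apply Series_le.
   intros j. replace (j + (N + m + 1))%nat with (j + N + m + 1)%nat by lia. pose proof (INR_nonneg1 (j + N + m + 1)).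
   split. apply Rmult_le_pos. lra. apply Rabs_pos. rewrite <- Rmult_plus_distr_l. apply Rmult_le_compat_l. lra.
   unfold Rminus. eapply Rle_trans. apply Rabs_triang. rewrite Rabs_Ropp, !Rabs_pos_eq by auto. lra.
   apply (ex_series_plus (fun j => (INR (j + N + m + 1) + 1) * Mv (j + N + m + 1)%nat) (fun j => (INR (j + N + m + 1) + 1) * Meq (j + N + m + 1)%nat)); auto. }
 pose proof (L_tail N Mv m HM EM) as LM. pose proof (L_tail N Meq m HMe EMe) as LE. fold TM in LM. fold TE in LE.
 set (FM := fs (fun j => (INR (j + N + 1) + 1) * Mv (j + N + 1)%nat) m) in *.
 set (FE := fs (fun j => (INR (j + N + 1) + 1) * Meq (j + N + 1)%nat) m) in *.
 assert (HF : Rabs (FE - FM) <= INR m * ((INR (N + m) + 1) * bE)).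
 { unfold FE, FM. rewrite <- fs_minus. eapply Rle_trans. apply fs_abs. apply fs_const_le. intros j Hj.
   replace ((INR (j + N + 1) + 1) * Meq (j + N + 1)%nat - (INR (j + N + 1) + 1) * Mv (j + N + 1)%nat)
     with ((INR (j + N + 1) + 1) * - (Mv (j + N + 1)%nat - Meq (j + N + 1)%nat)) by ring.
   rewrite Rabs_mult, Rabs_Ropp, Rabs_pos_eq by (pose proof (INR_nonneg1 (j+N+1)); lra).
   apply Rmult_le_compat. pose proof (INR_nonneg1 (j+N+1)); lra. apply Rabs_pos.
   assert (INR (j + N + 1) <= INR (N+m)) by (apply le_INR; lia). lra. auto. }
 assert (HTE : TE <= (INR (N+m) + 2) * q ^ (N + m + 1) * Weq).
 { unfold TE. rewrite (Series_ext _ (fun j => (INR (j + (N+m) + 1) + 1) * Meq (j + (N+m) + 1)%nat)) by (intros n0; replace (n0 + (N+m) + 1)%nat with (n0+N+m+1)%nat by lia; reflexivity).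
   apply (eq_tail_bound k r xeq Meq q (N+m)); auto. }
 assert (0 <= TE) by (apply Series_nonneg; auto; intros; apply Rmult_le_pos; [pose proof (INR_nonneg1 (j+N+m+1)); lra| auto]).
 apply Rabs_def2b in HF. apply Rabs_def2b in HZ.
 assert (Ht : Series (fun j => (INR (j + (N + m + 1)) + 1) * Rabs (Mv (j + (N + m + 1))%nat - Meq (j + (N + m + 1))%nat)) <= Series (fun j : nat => (fun i => (INR i + 1) * Rabs (Mv i - Meq i)) (j + (N + m + 1))%nat)).
 { right. reflexivity. }
 lra.
Qed.

Theorem theorem4p2 (N : nat) (k r alpha : R) (xeq : R) (Meq : nat -> R) :
  (1 <= N)%nat -> 0 < k -> 0 < r -> 0 < alpha ->
  (exists ystar, 0 < ystar < 1 /\ pN N ystar = 0 /\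
     (forall y, 0 < y < 1 -> pN N y = 0 -> y = ystar) /\
     alpha / r < FtildeN N ystar) ->
  is_equilibrium_S N k r alpha xeq Meq ->
  loc_exp_stable N k r alpha (reduce N xeq Meq) ->
  forall (x : R -> R) (M : R -> nat -> R),
    is_solution_S N k r alpha x M ->
    (forall eps, 0 < eps -> exists T, forall t, T <= t ->
        distX (x t) (M t) xeq Meq < eps) ->
    exists C gamma, 0 < C /\ 0 < gamma /\
      forall t, 0 <= t -> distX (x t) (M t) xeq Meq <= C * exp (- gamma * t).
Proof.
 intros HN Hk Hr Ha _ HE Hst x M HS Hconv.
 pose proof HS as [Hpos [Hcont [Hdx HdM]]].
 pose proof HE as [[Hxe [HMe EMe]] [Heqx HeqM]].
 destruct Hst as [_ [dl [Cs [gm [Hdl [HCs [Hgm [_ Hbd]]]]]]]].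
 set (Weq := Series (fun i => (INR i + 1) * Meq i)).
 assert (HW0 : 0 <= Weq).
 { apply Series_nonneg. intros; apply Rmult_le_pos; auto. pose proof (INR_nonneg1 j); lra. apply inX_W; auto. }
 assert (HN5 : 0 < INR N + 5) by (pose proof (pos_INR N); lra).
 set (eta := dl / (INR N + 5) / 2).
 assert (Heta : 0 < eta) by (unfold eta; apply Rdiv_lt_0_compat; [apply Rdiv_lt_0_compat|]; lra).
 destruct (Hconv eta Heta) as [T0 HT0].
 set (T := Rmax T0 1).
 assert (HT : 0 < T) by (unfold T; pose proof (Rmax_r T0 1); lra).
 assert (HTT : forall t, T <= t -> distX (x t) (M t) xeq Meq < eta).
 { intros t Ht. apply HT0. unfold T in Ht. pose proof (Rmax_l T0 1). lra. }
 set (U := fun s j => reduce N (x (T + s)) (M (T + s)) j).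
 assert (HU : is_solution_F N k r alpha U) by (apply shifted_solution; auto).
 assert (HU0 : distF N (U 0) (reduce N xeq Meq) < dl).
 { unfold U. rewrite Rplus_0_r. destruct (Hpos T ltac:(lra)) as [_ [_ EMT]].
   eapply Rle_lt_trans. apply distF_le; auto.
   specialize (HTT T (Rle_refl _)).
   apply Rlt_le_trans with ((INR N + 5) * eta). apply Rmult_lt_compat_l; auto.
   replace ((INR N + 5) * eta) with (dl / 2) by (unfold eta; field; lra). lra. }
 set (A := Cs * dl).
 assert (HA : 0 < A) by (unfold A; apply Rmult_lt_0_compat; lra).
 set (g1 := Rmin gm (1/2)).
 assert (Hg1 : 0 < g1 <= 1/2). { unfold g1. split. apply Rmin_pos; lra. apply Rmin_r. }
 assert (Hg1m : g1 <= gm) by apply Rmin_l.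
 assert (Hdec : forall t, T <= t -> distF N (U (t - T)) (reduce N xeq Meq) <= A * exp (-g1 * (t - T))).
 { intros t Ht. eapply Rle_trans. apply Hbd; auto. lra.
   pose proof (distF_le N (x T) (M T) xeq Meq).
   assert (0 <= distF N (U 0) (reduce N xeq Meq)).
   { unfold distF. apply cond_pos_sum. intros; apply Rabs_pos. }
   assert (exp (- gm * (t - T)) <= exp (-g1 * (t - T))).
   { destruct (Rle_lt_or_eq_dec _ _ (Rmult_le_compat_r (t - T) _ _ ltac:(lra) (Ropp_le_contravar _ _ Hg1m))) as [Hl|Hl].
     apply Rlt_le, exp_increasing; lra. rewrite Hl; lra. }
   unfold A. replace (Cs * dl * exp (- g1 * (t - T))) with (Cs * exp (- g1 * (t - T)) * dl) by ring.
   apply Rmult_le_compat; try lra. apply Rmult_le_pos. lra. apply Rlt_le, exp_pos.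
   apply Rmult_le_compat_l; lra. }
 assert (Hcomp : forall t j, T <= t -> (j <= N + 4)%nat ->
   Rabs (reduce N (x t) (M t) (S j) - reduce N xeq Meq (S j)) <= A * exp (-g1 * (t - T))).
 { intros t j Ht Hj. eapply Rle_trans. 2: apply (Hdec t Ht). unfold U, distF.
   replace (T + (t - T)) with t by ring.
   apply (sumR0_term (fun j => Rabs (reduce N (x t) (M t) (S j) - reduce N xeq Meq (S j)))); auto.
   intros; apply Rabs_pos. }
 assert (Hxb : forall t, T <= t -> Rabs (x t - xeq) <= A * exp (-g1 * (t - T))).
 { intros t Ht. apply (Hcomp t 0%nat Ht). lia. }
 assert (HZb : forall t, T <= t -> Rabs ((sumiM_tail N (M t) + sumM_tail N (M t) - M t N) - (sumiM_tail N Meq + sumM_tail N Meq - Meq N)) <= 3 * A * exp (-g1 * (t - T))).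
 { intros t Ht. pose proof (Hcomp t 2%nat Ht ltac:(lia)) as H3. pose proof (Hcomp t 3%nat Ht ltac:(lia)) as H4.
   pose proof (Hcomp t (N + 4)%nat Ht ltac:(lia)) as H5.
   replace (S (N + 4)) with (S (S (S (S (S N))))) in H5 by lia. rewrite !reduce_S5 in H5.
   simpl in H3, H4.
   replace ((sumiM_tail N (M t) + sumM_tail N (M t) - M t N) - (sumiM_tail N Meq + sumM_tail N Meq - Meq N))
     with ((sumiM_tail N (M t) - sumiM_tail N Meq) + (sumM_tail N (M t) - sumM_tail N Meq) - (M t N - Meq N)) by ring.
   unfold Rminus at 1. eapply Rle_trans. apply Rabs_triang. rewrite Rabs_Ropp.
   eapply Rle_trans. apply Rplus_le_compat_r. apply Rabs_triang. lra. }
 set (B := eta + 4 * k * A * Weq).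
 assert (HD : forall i t, T <= t -> Rabs (M t i - Meq i) <= B * exp (-g1 * (t - T))).
 { apply (D_bound N k r alpha x M xeq Meq T A g1 B); auto. lra.
   intros i. destruct (Hpos T ltac:(lra)) as [_ [_ EMT]]. specialize (HTT T (Rle_refl _)).
   unfold distX in HTT. pose proof (Rabs_pos (x T - xeq)).
   assert (Rabs (M T i - Meq i) <= (INR i + 1) * Rabs (M T i - Meq i)).
   { pose proof (pos_INR i). pose proof (Rabs_pos (M T i - Meq i)). nra. }
   assert ((INR i + 1) * Rabs (M T i - Meq i) <= Series (fun i => (INR i + 1) * Rabs (M T i - Meq i))).
   { apply (term_le_Series (fun i => (INR i + 1) * Rabs (M T i - Meq i))). intros; apply Rmult_le_pos. pose proof (INR_nonneg1 j); lra. apply Rabs_pos. apply exD; auto. }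
   assert (0 <= 4 * k * A * Weq) by (apply Rmult_le_pos; [|lra]; apply Rmult_le_pos; lra).
   unfold B; lra.
   unfold B, Weq in *. lra. }
 set (rho := k * xeq / (1 + k * xeq)).
 assert (Hkx : 0 <= k * xeq) by (apply Rmult_le_pos; lra).
 assert (Hrho1 : rho < 1).
 { unfold rho, Rdiv. apply (Rmult_lt_reg_r (1 + k * xeq)). lra. rewrite Rmult_assoc, Rinv_l by lra. lra. }
 set (q := Rmax rho (1/2)).
 assert (Hq : 0 < q < 1). { unfold q. split. pose proof (Rmax_r rho (1/2)); lra. apply Rmax_lub_lt; lra. }
 assert (Hrq : rho <= q) by apply Rmax_l.
 set (L := - ln q).
 assert (HL : 0 < L). { unfold L. pose proof (ln_increasing q 1 ltac:(lra) ltac:(lra)). rewrite ln_1 in H. lra. }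
 set (c0 := INR N + 2). set (c1 := g1 / L).
 assert (Hc0 : 0 < c0) by (unfold c0; pose proof (pos_INR N); lra).
 assert (Hc1 : 0 <= c1) by (unfold c1; apply Rlt_le, Rdiv_lt_0_compat; lra).
 set (Kc := c0 + 4 * c1 / g1).
 assert (HB0 : 0 <= B). { unfold B. assert (0 <= 4 * k * A * Weq) by (apply Rmult_le_pos; [|lra]; apply Rmult_le_pos; lra). lra. }
 set (C1 := 4 * A + (2 * B + 2 * Weq * exp L) * Kc ^ 2).
 assert (Hmain : forall t, T <= t -> distX (x t) (M t) xeq Meq <= C1 * exp (- (g1/2) * (t - T))).
 { intros t Ht. set (s := t - T). assert (Hs : 0 <= s) by (unfold s; lra).
   set (E := exp (- g1 * s)). set (E2 := exp (- (g1/2) * s)).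
   assert (HE0 : 0 < E) by apply exp_pos. assert (HE20 : 0 < E2) by apply exp_pos.
   assert (HEE2 : E <= E2). { unfold E, E2. destruct (Req_dec s 0) as [Z|Z]. rewrite Z, !Rmult_0_r; lra.
     apply Rlt_le, exp_increasing. assert (0 < g1 * s) by (apply Rmult_lt_0_compat; lra). lra. }
   destruct (nfloor_ex (g1 * s / L)) as [m [Hm1 Hm2]].
   { apply Rmult_le_pos. apply Rmult_le_pos; lra. apply Rlt_le, Rinv_0_lt_compat; lra. }
   destruct (Hpos t ltac:(lra)) as [_ [HMt EMt]].
   pose proof (distX_split_bound N k r (x t) (M t) xeq Meq m (A * E) (B * E) (3 * A * E) q Hk HMt EMt Hxe HMe EMe HeqM Hrq
      (fun i => HD i t Ht) (Hxb t Ht) (HZb t Ht)) as Hsplit.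
   fold Weq in Hsplit. rewrite plus_INR in Hsplit.
   set (K := INR N + INR m + 2) in *.
   assert (HK1 : 1 <= K) by (unfold K; pose proof (pos_INR N); pose proof (pos_INR m); lra).
   assert (HKc : K <= c0 + c1 * s). { unfold K, c0, c1. replace (g1 / L * s) with (g1 * s / L) by (field; lra). lra. }
   assert (HP : q ^ (N + m + 1) <= exp L * E).
   { replace (N + m + 1)%nat with (m + (N + 1))%nat by lia. rewrite pow_add.
     assert (q ^ (N + 1) <= 1). { rewrite <- (pow1 (N+1)). apply pow_incr; lra. }
     assert (0 <= q ^ m) by (apply pow_le; lra).
     assert (q ^ m <= exp L * E).
     { rewrite pow_exp_ln by lra. unfold E. rewrite <- exp_plus.
       destruct (Req_dec (INR m * ln q) (L + - g1 * s)) as [Z|Z]. rewrite Z; lra.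
       apply Rlt_le, exp_increasing.
       assert (INR m * ln q = - (INR m * L)) by (unfold L; ring).
       assert (g1 * s < (INR m + 1) * L).
       { apply (Rmult_lt_reg_r (/ L)). apply Rinv_0_lt_compat; lra.
         replace ((INR m + 1) * L * / L) with (INR m + 1) by (field; lra). exact Hm2. }
       lra. }
     nra. }
   assert (HP0 : 0 <= q ^ (N + m + 1)) by (apply pow_le; lra).
   assert (Hm : INR m <= INR N + INR m + 1) by (pose proof (pos_INR N); lra).
   assert (T1 : (INR N + INR m + 1) * ((INR N + INR m + 1) * (B * E)) + INR m * ((INR N + INR m + 1) * (B * E)) <= 2 * B * (K ^ 2 * E)).
   { unfold K. assert (0 <= B * E) by (apply Rmult_le_pos; lra). pose proof (pos_INR m). pose proof (pos_INR N).
     assert (0 <= (INR N + INR m + 1) * (B * E)) by (apply Rmult_le_pos; lra).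
     assert (INR m * ((INR N + INR m + 1) * (B * E)) <= (INR N + INR m + 1) * ((INR N + INR m + 1) * (B * E))) by (apply Rmult_le_compat_r; lra).
     assert ((INR N + INR m + 1) * ((INR N + INR m + 1) * (B * E)) <= (INR N + INR m + 2) * ((INR N + INR m + 2) * (B * E))).
     { apply Rmult_le_compat; try lra. all: apply Rmult_le_compat_r; lra. }
     simpl. nra. }
   assert (T2 : 2 * (K * q ^ (N + m + 1) * Weq) <= 2 * Weq * exp L * (K ^ 2 * E)).
   { assert (K * q ^ (N + m + 1) <= K * (exp L * E)) by (apply Rmult_le_compat_l; lra).
     assert (K * (exp L * E) <= K ^ 2 * (exp L * E)). { apply Rmult_le_compat_r. apply Rmult_le_pos; [apply Rlt_le, exp_pos|lra]. simpl; nra. }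
     assert (K * q ^ (N + m + 1) * Weq <= K ^ 2 * (exp L * E) * Weq) by (apply Rmult_le_compat_r; lra).
     nra. }
   assert (T3 : K ^ 2 * E <= Kc ^ 2 * E2).
   { eapply Rle_trans. 2: apply poly_exp; auto; lra.
     apply Rmult_le_compat_r. apply Rlt_le, exp_pos. apply pow_incr. lra. }
   assert (T4 : A * E <= A * E2) by (apply Rmult_le_compat_l; lra).
   assert (0 <= 2 * B + 2 * Weq * exp L). { assert (0 <= Weq * exp L) by (apply Rmult_le_pos; [lra|apply Rlt_le, exp_pos]). lra. }
   assert ((2 * B + 2 * Weq * exp L) * (K ^ 2 * E) <= (2 * B + 2 * Weq * exp L) * (Kc ^ 2 * E2)) by (apply Rmult_le_compat_l; lra).
   unfold C1. fold E2. nra. }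
 destruct (compact_bound N k r alpha x M xeq Meq T HS EMe ltac:(lra)) as [Bm HBm].
 set (G := exp ((g1/2) * T)).
 assert (HG : 1 <= G). { unfold G. rewrite <- exp_0. destruct (Req_dec ((g1/2)*T) 0) as [Z|Z]. rewrite Z; lra.
   apply Rlt_le, exp_increasing. apply Rmult_lt_0_compat; lra. }
 exists ((Rabs C1 + Rabs Bm + 1) * G), (g1/2). split. apply Rmult_lt_0_compat. pose proof (Rabs_pos C1); pose proof (Rabs_pos Bm); lra. lra.
 split. lra.
 intros t Ht. assert (Hsplit : exp (- (g1/2) * t) * G = exp (- (g1/2) * (t - T))).
 { unfold G. rewrite <- exp_plus. f_equal. ring. }
 pose proof (Rabs_pos C1). pose proof (Rabs_pos Bm). pose proof (exp_pos (- (g1/2) * t)) as Ep.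
 destruct (Rle_dec T t) as [HtT|HtT].
 - eapply Rle_trans. apply Hmain; auto. rewrite <- Hsplit.
   assert (C1 <= Rabs C1 + Rabs Bm + 1) by (pose proof (Rle_abs C1); lra).
   assert (0 <= exp (- (g1 / 2) * t) * G) by (apply Rmult_le_pos; lra).
   replace ((Rabs C1 + Rabs Bm + 1) * G * exp (- (g1 / 2) * t)) with ((Rabs C1 + Rabs Bm + 1) * (exp (- (g1 / 2) * t) * G)) by ring.
   apply Rmult_le_compat_r; lra.
 - eapply Rle_trans. apply HBm. lra.
   assert (1 <= exp (- (g1 / 2) * t) * G).
   { rewrite Hsplit. rewrite <- exp_0. destruct (Req_dec (- (g1 / 2) * (t - T)) 0) as [Z|Z]. rewrite Z; lra.
     apply Rlt_le, exp_increasing. assert (0 < (g1/2) * (T - t)) by (apply Rmult_lt_0_compat; lra). lra. }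
   replace ((Rabs C1 + Rabs Bm + 1) * G * exp (- (g1 / 2) * t)) with ((Rabs C1 + Rabs Bm + 1) * (exp (- (g1 / 2) * t) * G)) by ring.
   pose proof (Rle_abs Bm). nra.
Qed.
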